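(* Let $\Omega\subset\mathbb{R}^2$ be a Jordan domain with analytic boundary, let $f^{(0)}$ be a harmonic function in $\Omega$ extending to a real analytic function in $\overline\Omega$ with nonvanishing Hessian on $\overline\Omega$ (including $\partial\Omega$), and let $\varepsilon>0$. Then there is at most one real analytic family $f\colon\overline\Omega\times[-\varepsilon;\varepsilon]\to\mathbb{R}$ satisfying $f_{xx}+f_{yy}=t\sqrt{(f_{xy})^2-f_{xx}f_{yy}}$ and such that $f(x,y,t)=f^{(0)}(x,y)$ whenever $t=0$ or $(x,y)\in\partial\Omega$.
   Context: A Jordan domain with analytic boundary is a domain bounded by the image of a periodic injective real analytic map $\mathbb{R}\to\mathbb{R}^2$ with nowhere vanishing derivative. A real analytic family is a map $\overline\Omega\times[-\varepsilon;\varepsilon]\to\mathbb{R}$ extending to a real analytic function on a neighborhood of $\overline\Omega\times[-\varepsilon;\varepsilon]$. A function on $\overline\Omega$ is real analytic in the closed domain if it extends real analytically to a neighborhood of $\overline\Omega$. *)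

(* Defs.v *)
From Stdlib Require Import Reals.
From Coquelicot Require Import Coquelicot.
Open Scope R_scope.

(** Open sets (sup-distance balls; same topology as the Euclidean one). *)
Definition open2 (U : R -> R -> Prop) : Prop :=
  forall x y, U x y -> exists e, 0 < e /\
    forall x' y', Rabs (x' - x) < e -> Rabs (y' - y) < e -> U x' y'.

Definition open3 (U : R -> R -> R -> Prop) : Prop :=
  forall x y t, U x y t -> exists e, 0 < e /\
    forall x' y' t', Rabs (x' - x) < e -> Rabs (y' - y) < e ->
      Rabs (t' - t) < e -> U x' y' t'.

Definition closure2 (S : R -> R -> Prop) (x y : R) : Prop :=
  forall e, 0 < e -> exists x' y', S x' y' /\ Rabs (x' - x) < e /\ Rabs (y' - y) < e.

Definition boundary2 (S : R -> R -> Prop) (x y : R) : Prop :=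
  closure2 S x y /\ ~ S x y.

Definition bounded2 (S : R -> R -> Prop) : Prop :=
  exists M, forall x y, S x y -> Rabs x <= M /\ Rabs y <= M.

Definition analytic1 (g : R -> R) : Prop :=
  forall a, exists (c : nat -> R) (r : R), 0 < r /\
    forall x, Rabs (x - a) < r ->
      is_lim_seq (fun N => sum_f_R0 (fun i => c i * (x - a) ^ i) N) (g x).

Definition psum2 (c : nat -> nat -> R) (h k : R) (N : nat) : R :=
  sum_f_R0 (fun i => sum_f_R0 (fun j => c i j * h ^ i * k ^ j) N) N.

Definition analytic2_on (U : R -> R -> Prop) (g : R -> R -> R) : Prop :=
  forall a b, U a b -> exists (c : nat -> nat -> R) (r : R), 0 < r /\
    (exists M, forall N, psum2 (fun i j => Rabs (c i j)) r r N <= M) /\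
    forall x y, Rabs (x - a) < r -> Rabs (y - b) < r ->
      is_lim_seq (psum2 c (x - a) (y - b)) (g x y).

Definition psum3 (c : nat -> nat -> nat -> R) (h k l : R) (N : nat) : R :=
  sum_f_R0 (fun i => sum_f_R0 (fun j => sum_f_R0 (fun m =>
     c i j m * h ^ i * k ^ j * l ^ m) N) N) N.

Definition analytic3_on (U : R -> R -> R -> Prop) (g : R -> R -> R -> R) : Prop :=
  forall a b d, U a b d -> exists (c : nat -> nat -> nat -> R) (r : R), 0 < r /\
    (exists M, forall N, psum3 (fun i j m => Rabs (c i j m)) r r r N <= M) /\
    forall x y t, Rabs (x - a) < r -> Rabs (y - b) < r -> Rabs (t - d) < r ->
      is_lim_seq (psum3 c (x - a) (y - b) (t - d)) (g x y t).

Definition D1 (f : R -> R -> R) : R -> R -> R := fun x y => Derive (fun u => f u y) x.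
Definition D2 (f : R -> R -> R) : R -> R -> R := fun x y => Derive (fun v => f x v) y.

Definition fxx f := D1 (D1 f).
Definition fxy f := D2 (D1 f).
Definition fyy f := D2 (D2 f).

Definition path_avoiding (C : R -> R -> Prop) (px py qx qy : R) : Prop :=
  exists p1 p2 : R -> R,
    p1 0 = px /\ p2 0 = py /\ p1 1 = qx /\ p2 1 = qy /\
    (forall s, 0 <= s <= 1 -> continuity_pt p1 s /\ continuity_pt p2 s) /\
    (forall s, 0 <= s <= 1 -> ~ C (p1 s) (p2 s)).

(** Jordan domain with analytic boundary: the bounded (path-)component of the
    complement of the image of a periodic, injective-on-a-period, real analytic
    map R -> R^2 with nowhere vanishing derivative. *)
Definition jordan_analytic_domain (Om : R -> R -> Prop) : Prop :=
  exists (g1 g2 : R -> R) (T : R),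
    0 < T /\ analytic1 g1 /\ analytic1 g2 /\
    (forall s, g1 (s + T) = g1 s /\ g2 (s + T) = g2 s) /\
    (forall s s', 0 <= s < T -> 0 <= s' < T ->
        g1 s = g1 s' -> g2 s = g2 s' -> s = s') /\
    (forall s, Derive g1 s <> 0 \/ Derive g2 s <> 0) /\
    let Gam := fun x y => exists s, x = g1 s /\ y = g2 s in
    (exists x y, Om x y) /\
    bounded2 Om /\
    (forall x y, Om x y -> ~ Gam x y) /\
    (forall x y x' y', Om x y ->
        (Om x' y' <-> (~ Gam x' y' /\ path_avoiding Gam x y x' y'))).

Definition analytic2_near (K : R -> R -> Prop) (g : R -> R -> R) : Prop :=
  exists U, open2 U /\ (forall x y, K x y -> U x y) /\ analytic2_on U g.

Definition analytic3_near (K : R -> R -> R -> Prop) (g : R -> R -> R -> R) : Prop :=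
  exists U, open3 U /\ (forall x y t, K x y t -> U x y t) /\ analytic3_on U g.

Definition slice (f : R -> R -> R -> R) (t : R) : R -> R -> R := fun x y => f x y t.

Definition admissible_family (Om : R -> R -> Prop) (f0 : R -> R -> R) (eps : R)
    (f : R -> R -> R -> R) : Prop :=
  analytic3_near (fun x y t => closure2 Om x y /\ -eps <= t <= eps) f /\
  (forall x y t, Om x y -> -eps <= t <= eps ->
     0 <= (fxy (slice f t) x y) ^ 2 - fxx (slice f t) x y * fyy (slice f t) x y /\
     fxx (slice f t) x y + fyy (slice f t) x y =
       t * sqrt ((fxy (slice f t) x y) ^ 2 - fxx (slice f t) x y * fyy (slice f t) x y)) /\
  (forall x y, closure2 Om x y -> f x y 0 = f0 x y) /\
  (forall x y t, boundary2 Om x y -> -eps <= t <= eps -> f x y t = f0 x y).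

(* Main.v *)
Require Import Defs.
From Stdlib Require Import Reals Lra Psatz Lia ClassicalEpsilon Classical.
From Coquelicot Require Import Coquelicot.
Open Scope R_scope.

Lemma sqrt_tri_aux X Y Z W :
  sqrt ((X+Y)^2 + (Z+W)^2) <= sqrt (X^2+Z^2) + sqrt (Y^2+W^2).
Proof.
  assert (Hu := sqrt_pos (X^2+Z^2)). assert (Hz := sqrt_pos (Y^2+W^2)).
  assert (Hu2 := sqrt_sqrt (X^2+Z^2) ltac:(apply Rplus_le_le_0_compat; apply pow2_ge_0)).
  assert (Hz2 := sqrt_sqrt (Y^2+W^2) ltac:(apply Rplus_le_le_0_compat; apply pow2_ge_0)).
  apply Rsqr_incr_0_var.
  2: lra.
  unfold Rsqr. rewrite sqrt_sqrt by (apply Rplus_le_le_0_compat; apply pow2_ge_0).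
  assert (X*Y + Z*W <= sqrt (X^2+Z^2) * sqrt (Y^2+W^2)).
  { destruct (Rle_or_lt (X*Y+Z*W) 0). nra.
    apply Rsqr_incr_0_var. 2: nra. unfold Rsqr.
    replace (sqrt (X ^ 2 + Z ^ 2) * sqrt (Y ^ 2 + W ^ 2) *
      (sqrt (X ^ 2 + Z ^ 2) * sqrt (Y ^ 2 + W ^ 2))) with
      ((sqrt (X ^ 2 + Z ^ 2) * sqrt (X ^ 2 + Z ^ 2)) * (sqrt (Y ^ 2 + W ^ 2) * sqrt (Y ^ 2 + W ^ 2))) by ring.
    rewrite Hu2, Hz2. assert (0 <= (X*W-Z*Y)^2) by apply pow2_ge_0. nra. }
  nra.
Qed.

Lemma sqrt_tri_abs X Y Z W :
  Rabs (sqrt ((X+Y)^2 + (Z+W)^2) - sqrt (X^2+Z^2)) <= sqrt (Y^2+W^2).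
Proof.
  assert (H1 := sqrt_tri_aux X Y Z W).
  assert (H2 := sqrt_tri_aux (X+Y) (-Y) (Z+W) (-W)).
  replace (X + Y + - Y) with X in H2 by ring.
  replace (Z + W + - W) with Z in H2 by ring.
  replace ((-Y)^2 + (-W)^2) with (Y^2+W^2) in H2 by ring.
  apply Rabs_le; lra.
Qed.

Lemma pde_phi t a b c :
  0 <= b^2 - a*c -> a + c = t * sqrt (b^2 - a*c) ->
  (a + c) * sqrt (4 + t^2) = t * sqrt ((a-c)^2 + (2*b)^2).
Proof.
  intros H0 H1.
  set (s := sqrt (b^2 - a*c)) in *.
  assert (Hs : 0 <= s) by apply sqrt_pos.
  assert (Hs2 : s * s = b^2 - a*c) by (apply sqrt_sqrt; lra).
  replace ((a-c)^2 + (2*b)^2) with ((s * sqrt (4+t^2))^2).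
  - rewrite sqrt_pow2. rewrite H1; ring.
    apply Rmult_le_pos; auto; apply sqrt_pos.
  - rewrite Rpow_mult_distr. rewrite pow2_sqrt by nra.
    replace ((a - c) ^ 2 + (2 * b) ^ 2) with ((a+c)^2 + 4*(b^2-a*c)) by ring.
    rewrite H1. rewrite <- Hs2. ring.
Qed.

Lemma alg_key t a b c p q r :
  0 <= b^2 - a*c -> a + c = t * sqrt (b^2 - a*c) ->
  0 <= (b+q)^2 - (a+p)*(c+r) -> (a+p) + (c+r) = t * sqrt ((b+q)^2 - (a+p)*(c+r)) ->
  0 <= p -> 0 <= r -> q^2 <= p*r -> p + r <= 0.
Proof.
  intros E1 E2 E3 E4 Hp Hr Hq.
  assert (F1 := pde_phi t a b c E1 E2).
  assert (F2 := pde_phi t (a+p) (b+q) (c+r) E3 E4).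
  assert (T := sqrt_tri_abs (a-c) (p-r) (2*b) (2*q)).
  replace (a - c + (p - r)) with (a+p - (c+r)) in T by ring.
  replace (2*b + 2*q) with (2*(b+q)) in T by ring.
  assert (Z : sqrt ((p-r)^2 + (2*q)^2) <= p + r).
  { rewrite <- (sqrt_pow2 (p+r)) by lra. apply sqrt_le_1_alt. nra. }
  set (K := sqrt (4 + t^2)) in *.
  assert (HK : Rabs t < K).
  { assert (HK2 : K * K = 4 + t^2) by (apply sqrt_sqrt; nra).
    assert (HK0 : 0 <= K) by apply sqrt_pos.
    assert (Ht2 : Rabs t * Rabs t = t * t) by (rewrite <- Rabs_mult; apply Rabs_right; nra).
    assert (0 <= Rabs t) by apply Rabs_pos.
    destruct (Rlt_or_le (Rabs t) K); auto. nra. }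
  set (u := sqrt ((a - c) ^ 2 + (2 * b) ^ 2)) in *.
  set (w := sqrt ((a + p - (c + r)) ^ 2 + (2 * (b + q)) ^ 2)) in *.
  set (z := sqrt ((p - r) ^ 2 + (2 * q) ^ 2)) in *.
  assert (Hd : (p + r) * K = t * (w - u)) by lra.
  assert (t * (w - u) <= Rabs t * (p + r)).
  { apply Rle_trans with (Rabs (t * (w-u))). apply Rle_abs.
    rewrite Rabs_mult. apply Rmult_le_compat_l. apply Rabs_pos. lra. }
  assert (0 <= Rabs t) by apply Rabs_pos.
  nra.
Qed.

Lemma isd_eq (f : R -> R) (x l l' : R) : is_derive f x l -> l = l' -> is_derive f x l'.
Proof. intros H <-; exact H. Qed.

Lemma isd_plus (f g : R -> R) (x a b : R) : is_derive f x a -> is_derive g x b ->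
  is_derive (fun t => f t + g t) x (a + b).
Proof. intros. apply (is_derive_plus f g x a b); auto. Qed.

Lemma isd_mult (f g : R -> R) (x a b : R) : is_derive f x a -> is_derive g x b ->
  is_derive (fun t => f t * g t) x (a * g x + f x * b).
Proof. intros. apply (is_derive_mult f g x a b); auto. intros; apply Rmult_comm. Qed.

Lemma isd_const (c : R) x : is_derive (fun _ => c) x 0.
Proof. apply (is_derive_const c x). Qed.

Lemma isd_lin (h v x : R) : is_derive (fun s => h + s * v) x v.
Proof.
  apply isd_eq with (0 + (1 * v + x * 0)).
  apply isd_plus. apply isd_const. apply isd_mult. apply (is_derive_id x). apply isd_const.
  ring.
Qed.

Lemma isd_comp (f g : R -> R) (x a b : R) : is_derive f (g x) a -> is_derive g x b ->
  is_derive (fun t => f (g t)) x (b * a).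
Proof. intros. apply (is_derive_comp f g x a b); auto. Qed.

Lemma isd_sum (f f' : nat -> R -> R) (x : R) N :
  (forall i, (i <= N)%nat -> is_derive (f i) x (f' i x)) ->
  is_derive (fun s => sum_f_R0 (fun i => f i s) N) x (sum_f_R0 (fun i => f' i x) N).
Proof.
  induction N; intros H; simpl.
  - apply H; lia.
  - apply isd_plus. apply IHN; intros; apply H; lia. apply H; lia.
Qed.

Fixpoint fall (i p : nat) : R :=
  match p with O => 1 | S p' => fall i p' * INR (i - p') end.
Definition ee (p i : nat) (h : R) : R := fall i p * h ^ (i - p).

Lemma fall_nonneg i p : 0 <= fall i p.
Proof. induction p; simpl. lra. apply Rmult_le_pos; auto. apply pos_INR. Qed.

Lemma fall_le i p : fall i p <= (INR i + 1) ^ p.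
Proof.
  induction p; simpl. lra.
  rewrite (Rmult_comm (INR i + 1)).
  apply Rmult_le_compat. apply fall_nonneg. apply pos_INR. auto.
  assert (INR (i - p) <= INR i) by (apply le_INR; lia). lra.
Qed.

Lemma fall_zero i p : (i < p)%nat -> fall i p = 0.
Proof.
  induction p; intros H. lia. simpl.
  replace (i - p)%nat with 0%nat by lia. simpl. ring.
Qed.

Lemma ee_deriv p i x : is_derive (ee p i) x (ee (S p) i x).
Proof.
  unfold ee. simpl.
  apply isd_eq with (fall i p * (INR (i - p) * 1 * x ^ Nat.pred (i - p))).
  apply is_derive_scal. apply is_derive_pow. apply (is_derive_id x).
  replace (Nat.pred (i - p)) with (i - S p)%nat by lia. ring.
Qed.

Lemma ee_line p i h v s0 :
  is_derive (fun s => ee p i (h + s * v)) s0 (v * ee (S p) i (h + s0 * v)).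
Proof.
  apply isd_comp. apply ee_deriv. apply isd_lin.
Qed.

Lemma ee_bound p i h rho : Rabs h <= rho -> Rabs (ee p i h) <= fall i p * rho ^ (i - p).
Proof.
  intros H. unfold ee. rewrite Rabs_mult, Rabs_right by (apply Rle_ge, fall_nonneg).
  apply Rmult_le_compat_l. apply fall_nonneg. rewrite <- RPow_abs.
  apply pow_incr. split; auto. apply Rabs_pos.
Qed.

Definition S2 (F : nat -> nat -> R) (N : nat) : R :=
  sum_f_R0 (fun i => sum_f_R0 (fun j => F i j) N) N.

Lemma S2_succ F N : S2 F (S N) =
  S2 F N + sum_f_R0 (fun i => F i (S N)) N + sum_f_R0 (fun j => F (S N) j) (S N).
Proof.
  unfold S2. rewrite tech5.
  replace (sum_f_R0 (fun i : nat => sum_f_R0 (fun j : nat => F i j) (S N)) N) with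
    (sum_f_R0 (fun i : nat => sum_f_R0 (fun j : nat => F i j) N + F i (S N)) N).
  rewrite (plus_sum (fun i => sum_f_R0 (fun j => F i j) N) (fun i => F i (S N))). ring.
  apply sum_eq. intros; rewrite tech5; reflexivity.
Qed.

Lemma sum_abs_le (F B : nat -> R) N : (forall i, Rabs (F i) <= B i) ->
  Rabs (sum_f_R0 F N) <= sum_f_R0 B N.
Proof.
  intros H. eapply Rle_trans. apply sum_f_R0_triangle. apply sum_Rle. intros; auto.
Qed.

Lemma S2_abs_le F B N : (forall i j, Rabs (F i j) <= B i j) -> Rabs (S2 F N) <= S2 B N.
Proof.
  intros H. unfold S2. apply sum_abs_le. intros. apply sum_abs_le. auto.
Qed.

Lemma S2_cauchy F B : (forall i j, Rabs (F i j) <= B i j) ->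
  forall N n, (N <= n)%nat -> Rabs (S2 F n - S2 F N) <= S2 B n - S2 B N.
Proof.
  intros H N n Hn. induction Hn.
  - rewrite !Rminus_diag, Rabs_R0. lra.
  - rewrite !S2_succ.
    assert (H1 := sum_abs_le (fun i => F i (S m)) (fun i => B i (S m)) m ltac:(intros; apply H)).
    assert (H2 := sum_abs_le (fun j => F (S m) j) (fun j => B (S m) j) (S m) ltac:(intros; apply H)).
    replace (S2 F m + sum_f_R0 (fun i : nat => F i (S m)) m +
      sum_f_R0 (fun j : nat => F (S m) j) (S m) - S2 F N) with
      ((S2 F m - S2 F N) + sum_f_R0 (fun i : nat => F i (S m)) m +
      sum_f_R0 (fun j : nat => F (S m) j) (S m)) by ring.
    eapply Rle_trans. apply Rabs_triang.
    assert (H3 := Rabs_triang (S2 F m - S2 F N) (sum_f_R0 (fun i : nat => F i (S m)) m)).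
    lra.
Qed.

Lemma S2_incr B : (forall i j, 0 <= B i j) -> forall N, S2 B N <= S2 B (S N).
Proof.
  intros H N. rewrite S2_succ.
  assert (0 <= sum_f_R0 (fun i => B i (S N)) N) by (apply cond_pos_sum; auto).
  assert (0 <= sum_f_R0 (fun j => B (S N) j) (S N)) by (apply cond_pos_sum; auto).
  lra.
Qed.

Lemma incr_mono (u : nat -> R) : (forall n, u n <= u (S n)) ->
  forall N n, (N <= n)%nat -> u N <= u n.
Proof. intros H N n Hn. induction Hn. lra. specialize (H m). lra. Qed.

Lemma lim_le_ev (u : nat -> R) (l c : R) N : is_lim_seq u l ->
  (forall n, (N <= n)%nat -> u n <= c) -> l <= c.
Proof.
  intros Hl H. destruct (Rle_or_lt l c) as [|Hlt]; auto. exfalso.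
  apply is_lim_seq_Reals in Hl. destruct (Hl (l - c)) as [N1 HN1]. lra.
  specialize (HN1 (max N N1) ltac:(lia)). specialize (H (max N N1) ltac:(lia)).
  unfold R_dist in HN1. apply Rabs_def2 in HN1. lra.
Qed.

Lemma lim_ge_ev (u : nat -> R) (l c : R) N : is_lim_seq u l ->
  (forall n, (N <= n)%nat -> c <= u n) -> c <= l.
Proof.
  intros Hl H. destruct (Rle_or_lt c l) as [|Hlt]; auto. exfalso.
  apply is_lim_seq_Reals in Hl. destruct (Hl (c - l)) as [N1 HN1]. lra.
  specialize (HN1 (max N N1) ltac:(lia)). specialize (H (max N N1) ltac:(lia)).
  unfold R_dist in HN1. apply Rabs_def2 in HN1. lra.
Qed.

Definition LimR (u : nat -> R) : R := real (Lim_seq u).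

Lemma LimR_correct u l : is_lim_seq u l -> LimR u = l.
Proof. intros H. unfold LimR. rewrite (is_lim_seq_unique u l H). reflexivity. Qed.

Lemma unif_S2 {X : Type} (Dom : X -> Prop) (Fs : X -> nat -> nat -> R)
  (B : nat -> nat -> R) (L : R) :
  (forall i j, 0 <= B i j) ->
  (forall x i j, Dom x -> Rabs (Fs x i j) <= B i j) ->
  (forall N, S2 B N <= L) ->
  (forall x, Dom x -> is_lim_seq (S2 (Fs x)) (LimR (S2 (Fs x)))) /\
  (forall eps, 0 < eps -> exists N, forall n x, (N <= n)%nat -> Dom x ->
      Rabs (LimR (S2 (Fs x)) - S2 (Fs x) n) < eps) /\
  (forall x, Dom x -> Rabs (LimR (S2 (Fs x))) <= L).
Proof.
  intros HB0 HF HL.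
  assert (Hinc := S2_incr B HB0).
  destruct (ex_finite_lim_seq_incr (S2 B) L Hinc HL) as [l Hl].
  assert (Tl : forall n, S2 B n <= l).
  { intros n. apply (lim_ge_ev _ _ _ n Hl). intros; apply incr_mono; auto. }
  assert (lL : l <= L) by (apply (lim_le_ev _ _ _ 0 Hl); intros; apply HL).
  assert (HC : forall x, Dom x -> forall N n, (N <= n)%nat ->
    Rabs (S2 (Fs x) n - S2 (Fs x) N) <= l - S2 B N).
  { intros x Hx N n Hn. eapply Rle_trans. apply S2_cauchy. intros; apply HF; auto. exact Hn.
    change (fun i j : nat => B i j) with B. specialize (Tl n). lra. }
  assert (Hlim : forall x, Dom x -> is_lim_seq (S2 (Fs x)) (LimR (S2 (Fs x)))).
  { intros x Hx.
    assert (Hex : ex_finite_lim_seq (S2 (Fs x))).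
    { apply ex_lim_seq_cauchy_corr. intros eps.
      apply is_lim_seq_Reals in Hl. destruct (Hl (eps/2)) as [N HN].
      assert (H0 := cond_pos eps); lra.
      exists N. intros n m Hn Hm.
      assert (A1 := HC x Hx N n Hn). assert (A2 := HC x Hx N m Hm).
      specialize (HN N (le_n N)). unfold R_dist in HN. apply Rabs_def2 in HN.
      replace (S2 (Fs x) n - S2 (Fs x) m) with
        ((S2 (Fs x) n - S2 (Fs x) N) - (S2 (Fs x) m - S2 (Fs x) N)) by ring.
      eapply Rle_lt_trans. apply Rabs_triang. rewrite Rabs_Ropp. lra. }
    destruct Hex as [la Hla]. rewrite (LimR_correct _ _ Hla). exact Hla. }
  split; [exact Hlim|split].
  - intros eps Heps.
    apply is_lim_seq_Reals in Hl. destruct (Hl (eps/2)) as [N HN]. lra.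
    exists N. intros n x Hn Hx.
    assert (Hb : Rabs (LimR (S2 (Fs x)) - S2 (Fs x) n) <= l - S2 B n).
    { assert (Hl2 := is_lim_seq_abs _ _ (is_lim_seq_minus _ _ _ _ _ (Hlim x Hx)
         (is_lim_seq_const (S2 (Fs x) n)) ltac:(reflexivity))).
      simpl in Hl2.
      apply (lim_le_ev _ _ _ n Hl2). intros m Hm. apply HC; auto. }
    specialize (HN n Hn). unfold R_dist in HN. apply Rabs_def2 in HN. lra.
  - intros x Hx.
    assert (Hl2 := is_lim_seq_abs _ _ (Hlim x Hx)). simpl in Hl2.
    apply (lim_le_ev _ _ _ 0 Hl2). intros n _.
    eapply Rle_trans. apply S2_abs_le. intros; apply HF; auto. auto.
Qed.

Lemma lim_ratio1 : is_lim_seq (fun n => (INR n + 2) / (INR n + 1)) 1.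
Proof.
  apply is_lim_seq_ext with (fun n => 1 + / (INR n + 1)).
  { intros n. assert (0 <= INR n) by apply pos_INR. field. lra. }
  replace (Finite 1) with (Rbar_plus 1 0) by (simpl; f_equal; ring).
  apply is_lim_seq_plus'. apply is_lim_seq_const.
  replace (Finite 0) with (Rbar_inv p_infty) by reflexivity.
  apply is_lim_seq_inv. 2: discriminate.
  apply is_lim_seq_ext with (fun n => INR (S n)). intros; rewrite S_INR; reflexivity.
  apply (is_lim_seq_incr_1 INR p_infty). apply is_lim_seq_INR.
Qed.

Lemma lim_pow (u : nat -> R) (l : R) p : is_lim_seq u l -> is_lim_seq (fun n => u n ^ p) (l ^ p).
Proof.
  intros H. induction p; simpl. apply is_lim_seq_const.
  apply (is_lim_seq_mult' u (fun n => u n ^ p)); auto.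
Qed.

Lemma poly_geom_series p : exists C, forall N,
  sum_f_R0 (fun i => (INR i + 1) ^ p * (3/4) ^ i) N <= C.
Proof.
  set (a := fun n => (INR n + 1) ^ p * (3/4) ^ n).
  assert (Hpos : forall n, 0 < a n).
  { intros n. unfold a. apply Rmult_lt_0_compat; apply pow_lt.
    assert (0 <= INR n) by apply pos_INR. lra. lra. }
  assert (Hex : ex_series (fun n => Rabs (a n))).
  { apply ex_series_DAlembert with (3/4). lra. intros n; specialize (Hpos n); lra.
    apply is_lim_seq_ext with (fun n => ((INR n + 2) / (INR n + 1)) ^ p * (3/4)).
    { intros n. unfold a. rewrite Rabs_right.
      2: { apply Rle_ge. apply Rlt_le. apply Rdiv_lt_0_compat; apply Hpos. }
      rewrite S_INR. assert (0 <= INR n) by apply pos_INR.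
      unfold Rdiv. rewrite Rpow_mult_distr. rewrite pow_inv.
      replace (INR n + 1 + 1) with (INR n + 2) by ring.
      change ((3 * / 4) ^ S n) with ((3 * / 4) * (3 * / 4) ^ n).
      field. split. apply pow_nonzero. lra. apply pow_nonzero. lra. }
    assert (HL : is_lim_seq (fun n => ((INR n + 2) / (INR n + 1)) ^ p * (3/4)) (1 ^ p * (3/4))).
    { apply (is_lim_seq_mult' _ _ (1 ^ p) (3/4)). apply lim_pow. apply lim_ratio1. apply is_lim_seq_const. }
    rewrite pow1, Rmult_1_l in HL. exact HL. }
  destruct Hex as [l Hl].
  exists l. intros N.
  assert (Hl' : is_lim_seq (sum_n (fun n => Rabs (a n))) l) by exact Hl.
  apply (lim_ge_ev _ _ _ N Hl'). intros n Hn.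
  rewrite sum_n_Reals.
  apply Rle_trans with (sum_f_R0 (fun n => Rabs (a n)) N).
  apply sum_Rle. intros. rewrite Rabs_right. unfold a; lra. specialize (Hpos n0); lra.
  apply (incr_mono (sum_f_R0 (fun n => Rabs (a n)))); auto.
  intros m. simpl. assert (0 <= Rabs (a (S m))) by apply Rabs_pos. lra.
Qed.

Lemma fall_geom_series p : exists C, forall N,
  sum_f_R0 (fun i => fall i p * (3/4) ^ i) N <= C.
Proof.
  destruct (poly_geom_series p) as [C HC]. exists C. intros N.
  eapply Rle_trans. 2: apply (HC N). apply sum_Rle. intros.
  apply Rmult_le_compat_r. apply pow_le; lra. apply fall_le.
Qed.

Lemma sum_term_le (f : nat -> R) N i : (forall k, 0 <= f k) -> (i <= N)%nat -> f i <= sum_f_R0 f N.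
Proof.
  intros H Hi. induction N.
  - replace i with 0%nat by lia. simpl; lra.
  - simpl. destruct (Nat.eq_dec i (S N)). subst. assert (0 <= sum_f_R0 f N) by (apply cond_pos_sum; auto). lra.
    assert (f i <= sum_f_R0 f N) by (apply IHN; lia). specialize (H (S N)). lra.
Qed.

Lemma S2_term_le F N i j : (forall a b, 0 <= F a b) -> (i <= N)%nat -> (j <= N)%nat -> F i j <= S2 F N.
Proof.
  intros H Hi Hj. unfold S2.
  apply Rle_trans with (sum_f_R0 (fun j => F i j) N).
  apply (sum_term_le (fun j => F i j)); auto.
  apply (sum_term_le (fun i => sum_f_R0 (fun j => F i j) N)); auto.
  intros; apply cond_pos_sum; auto.
Qed.

Lemma sum_lin (f g : nat -> R) a b N :
  sum_f_R0 (fun i => a * f i + b * g i) N = a * sum_f_R0 f N + b * sum_f_R0 g N.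
Proof. induction N; simpl. ring. rewrite IHN. ring. Qed.

Lemma S2_lin F G a b N : S2 (fun i j => a * F i j + b * G i j) N = a * S2 F N + b * S2 G N.
Proof.
  unfold S2. rewrite <- sum_lin. apply sum_eq. intros i _. apply sum_lin.
Qed.

Lemma sum_scal (f : nat -> R) a N : sum_f_R0 (fun i => a * f i) N = a * sum_f_R0 f N.
Proof. induction N; simpl. ring. rewrite IHN. ring. Qed.

Lemma S2_prod (a b : nat -> R) M N : S2 (fun i j => M * a i * b j) N = M * sum_f_R0 a N * sum_f_R0 b N.
Proof.
  unfold S2.
  transitivity (sum_f_R0 (fun i => (M * sum_f_R0 b N) * a i) N).
  apply sum_eq. intros i _. rewrite (sum_scal b (M * a i) N). ring.
  rewrite sum_scal. ring.
Qed.

Section PS2.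
Variable c : nat -> nat -> R.
Variable r M : R.
Hypothesis Hr : 0 < r.
Hypothesis HM : forall N, S2 (fun i j => Rabs (c i j) * r ^ i * r ^ j) N <= M.

Definition Tm p q h k i j := c i j * ee p i h * ee q j k.
Definition Sp p q h k N := S2 (Tm p q h k) N.
Definition Arel p q h k := LimR (Sp p q h k).

Let rho1 := 3 * r / 4.

Lemma coef_bound i j : Rabs (c i j) * r ^ i * r ^ j <= M.
Proof.
  eapply Rle_trans. 2: apply (HM (max i j)).
  apply (S2_term_le (fun i j => Rabs (c i j) * r ^ i * r ^ j)).
  intros. apply Rmult_le_pos. apply Rmult_le_pos. apply Rabs_pos. apply pow_le; lra. apply pow_le; lra.
  lia. lia.
Qed.

Lemma M_nonneg : 0 <= M.
Proof. eapply Rle_trans. 2: apply (coef_bound 0 0). simpl. rewrite !Rmult_1_r. apply Rabs_pos. Qed.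

Definition ww p i := fall i p * (3/4) ^ i / rho1 ^ p.

Lemma ee_ww p i h : Rabs h <= rho1 -> Rabs (ee p i h) <= ww p i * r ^ i.
Proof.
  intros H. eapply Rle_trans. apply (ee_bound p i h rho1 H).
  unfold ww. assert (Hr1 : 0 < rho1) by (unfold rho1; lra).
  destruct (Compare_dec.le_lt_dec p i) as [Hpi|Hpi].
  - assert (Heq : rho1 ^ (i - p) * rho1 ^ p = rho1 ^ i).
    { rewrite <- pow_add. f_equal. lia. }
    assert (Hr2 : rho1 ^ i = (3/4) ^ i * r ^ i).
    { rewrite <- Rpow_mult_distr. f_equal. unfold rho1; field. }
    assert (Hpp : 0 < rho1 ^ p) by (apply pow_lt; lra).
    assert (Hq : rho1 ^ (i - p) = (3/4) ^ i * r ^ i / rho1 ^ p).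
    { rewrite <- Hr2, <- Heq. field. lra. }
    rewrite Hq. right. field. lra.
  - rewrite fall_zero by auto. lra.
Qed.

Lemma ww_nonneg p i : 0 <= ww p i.
Proof.
  unfold ww. apply Rmult_le_pos. apply Rmult_le_pos. apply fall_nonneg. apply pow_le; lra.
  apply Rlt_le, Rinv_0_lt_compat, pow_lt. unfold rho1; lra.
Qed.

Lemma Tm_bound p q h k i j : Rabs h <= rho1 -> Rabs k <= rho1 ->
  Rabs (Tm p q h k i j) <= M * ww p i * ww q j.
Proof.
  intros Hh Hk. unfold Tm. rewrite !Rabs_mult.
  assert (H1 := ee_ww p i h Hh). assert (H2 := ee_ww q j k Hk).
  assert (H3 := coef_bound i j).
  assert (0 <= ww p i) by apply ww_nonneg. assert (0 <= ww q j) by apply ww_nonneg.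
  apply Rle_trans with (Rabs (c i j) * (ww p i * r ^ i) * (ww q j * r ^ j)).
  apply Rmult_le_compat. apply Rmult_le_pos; apply Rabs_pos. apply Rabs_pos.
  apply Rmult_le_compat_l. apply Rabs_pos. auto. auto.
  replace (Rabs (c i j) * (ww p i * r ^ i) * (ww q j * r ^ j)) with
    ((Rabs (c i j) * r ^ i * r ^ j) * ww p i * ww q j) by ring.
  apply Rmult_le_compat_r. auto. apply Rmult_le_compat_r. auto. auto.
Qed.

Lemma ww_sum p : exists C, forall N, sum_f_R0 (ww p) N <= C.
Proof.
  destruct (fall_geom_series p) as [C HC].
  exists (C / rho1 ^ p). intros N. unfold ww, Rdiv.
  rewrite <- scal_sum. rewrite Rmult_comm. apply Rmult_le_compat_r.
  apply Rlt_le, Rinv_0_lt_compat, pow_lt. unfold rho1; lra. apply HC.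
Qed.

Definition Box (x : R * R) := Rabs (fst x) <= rho1 /\ Rabs (snd x) <= rho1.

Lemma unif_pq p q :
  (forall x, Box x -> is_lim_seq (Sp p q (fst x) (snd x)) (Arel p q (fst x) (snd x))) /\
  (forall eps, 0 < eps -> exists N, forall n x, (N <= n)%nat -> Box x ->
      Rabs (Arel p q (fst x) (snd x) - Sp p q (fst x) (snd x) n) < eps) /\
  (exists L, forall x, Box x -> Rabs (Arel p q (fst x) (snd x)) <= L).
Proof.
  destruct (ww_sum p) as [Cp HCp]. destruct (ww_sum q) as [Cq HCq].
  assert (HMn := M_nonneg).
  assert (Hsp : forall N, 0 <= sum_f_R0 (ww p) N) by (intros; apply cond_pos_sum; apply ww_nonneg).
  assert (Hsq : forall N, 0 <= sum_f_R0 (ww q) N) by (intros; apply cond_pos_sum; apply ww_nonneg).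
  destruct (unif_S2 Box (fun x => Tm p q (fst x) (snd x)) (fun i j => M * ww p i * ww q j) (M * Cp * Cq))
    as [H1 [H2 H3]].
  - intros. apply Rmult_le_pos. apply Rmult_le_pos. auto. apply ww_nonneg. apply ww_nonneg.
  - intros x i j [Hx1 Hx2]. apply Tm_bound; auto.
  - intros N. rewrite S2_prod. apply Rmult_le_compat. apply Rmult_le_pos; auto. auto.
    apply Rmult_le_compat_l; auto. auto.
  - split; [|split].
    + intros x Hx. apply (H1 x Hx).
    + intros eps He. destruct (H2 eps He) as [N HN]. exists N. intros. apply HN; auto.
    + exists (M * Cp * Cq). intros x Hx. apply (H3 x Hx).
Qed.

Lemma Tm_line p q h k v1 v2 i j s0 :
  is_derive (fun s => Tm p q (h + s * v1) (k + s * v2) i j) s0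
    (v1 * Tm (S p) q (h + s0 * v1) (k + s0 * v2) i j + v2 * Tm p (S q) (h + s0 * v1) (k + s0 * v2) i j).
Proof.
  unfold Tm.
  eapply isd_eq. apply isd_mult. apply isd_mult. apply isd_const. apply ee_line. apply ee_line.
  simpl. ring.
Qed.

Lemma Sp_line p q h k v1 v2 n s0 :
  is_derive (fun s => Sp p q (h + s * v1) (k + s * v2) n) s0
    (v1 * Sp (S p) q (h + s0 * v1) (k + s0 * v2) n + v2 * Sp p (S q) (h + s0 * v1) (k + s0 * v2) n).
Proof.
  unfold Sp. rewrite <- S2_lin. unfold S2.
  apply (isd_sum (fun i s => sum_f_R0 (fun j => Tm p q (h + s * v1) (k + s * v2) i j) n)
     (fun i s0 => sum_f_R0 (fun j => v1 * Tm (S p) q (h + s0 * v1) (k + s0 * v2) i j +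
        v2 * Tm p (S q) (h + s0 * v1) (k + s0 * v2) i j) n)).
  intros i _.
  apply (isd_sum (fun j s => Tm p q (h + s * v1) (k + s * v2) i j)
     (fun j s0 => v1 * Tm (S p) q (h + s0 * v1) (k + s0 * v2) i j +
        v2 * Tm p (S q) (h + s0 * v1) (k + s0 * v2) i j)).
  intros j _. apply Tm_line.
Qed.

Lemma Arel_line p q h k v1 v2 : Rabs h < r / 2 -> Rabs k < r / 2 ->
  is_derive (fun s => Arel p q (h + s * v1) (k + s * v2)) 0
    (v1 * Arel (S p) q h k + v2 * Arel p (S q) h k).
Proof.
  intros Hh Hk.
  assert (Hd : 0 < (r / 4) / (Rabs v1 + Rabs v2 + 1)).
  { apply Rdiv_lt_0_compat. lra. assert (0 <= Rabs v1) by apply Rabs_pos.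
    assert (0 <= Rabs v2) by apply Rabs_pos. lra. }
  set (d := mkposreal _ Hd).
  assert (HB : forall s, Boule 0 d s -> Box (h + s * v1, k + s * v2)).
  { intros s Hs. unfold Boule in Hs. simpl in Hs. rewrite Rminus_0_r in Hs.
    assert (0 <= Rabs v1) by apply Rabs_pos. assert (0 <= Rabs v2) by apply Rabs_pos.
    assert (Hs1 : Rabs s * (Rabs v1 + Rabs v2 + 1) < r / 4).
    { apply Rmult_lt_reg_r with (/ (Rabs v1 + Rabs v2 + 1)).
      apply Rinv_0_lt_compat; lra. rewrite Rmult_assoc, Rinv_r by lra. lra. }
    assert (0 <= Rabs s) by apply Rabs_pos.
    unfold Box, rho1; simpl. split.
    - eapply Rle_trans. apply Rabs_triang. rewrite Rabs_mult. nra.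
    - eapply Rle_trans. apply Rabs_triang. rewrite Rabs_mult. nra. }
  destruct (unif_pq p q) as [Lpq _].
  destruct (unif_pq (S p) q) as [_ [U1 _]].
  destruct (unif_pq p (S q)) as [_ [U2 _]].
  apply is_derive_Reals.
  assert (Hder := CVU_derivable
    (fun n s => Sp p q (h + s * v1) (k + s * v2) n)
    (fun n s => v1 * Sp (S p) q (h + s * v1) (k + s * v2) n + v2 * Sp p (S q) (h + s * v1) (k + s * v2) n)
    (fun s => Arel p q (h + s * v1) (k + s * v2))
    (fun s => v1 * Arel (S p) q (h + s * v1) (k + s * v2) + v2 * Arel p (S q) (h + s * v1) (k + s * v2))
    0 d).
  replace (v1 * Arel (S p) q h k + v2 * Arel p (S q) h k) with
    (v1 * Arel (S p) q (h + 0 * v1) (k + 0 * v2) + v2 * Arel p (S q) (h + 0 * v1) (k + 0 * v2))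
    by (rewrite !Rmult_0_l, !Rplus_0_r; reflexivity).
  apply Hder.
  - intros eps He.
    set (e' := eps / (Rabs v1 + Rabs v2 + 1)).
    assert (He' : 0 < e').
    { unfold e'. apply Rdiv_lt_0_compat. lra. assert (0 <= Rabs v1) by apply Rabs_pos.
      assert (0 <= Rabs v2) by apply Rabs_pos. lra. }
    destruct (U1 e' He') as [N1 HN1]. destruct (U2 e' He') as [N2 HN2].
    exists (max N1 N2). intros n s Hn Hs.
    specialize (HN1 n _ ltac:(lia) (HB s Hs)). specialize (HN2 n _ ltac:(lia) (HB s Hs)).
    simpl in HN1, HN2.
    set (a1 := Arel (S p) q (h + s * v1) (k + s * v2) - Sp (S p) q (h + s * v1) (k + s * v2) n) in *.
    set (a2 := Arel p (S q) (h + s * v1) (k + s * v2) - Sp p (S q) (h + s * v1) (k + s * v2) n) in *.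
    replace (v1 * Arel (S p) q (h + s * v1) (k + s * v2) + v2 * Arel p (S q) (h + s * v1) (k + s * v2) -
      (v1 * Sp (S p) q (h + s * v1) (k + s * v2) n + v2 * Sp p (S q) (h + s * v1) (k + s * v2) n))
      with (v1 * a1 + v2 * a2) by (unfold a1, a2; ring).
    eapply Rle_lt_trans. apply Rabs_triang. rewrite !Rabs_mult.
    assert (0 <= Rabs v1) by apply Rabs_pos. assert (0 <= Rabs v2) by apply Rabs_pos.
    assert (Rabs v1 * Rabs a1 <= Rabs v1 * e') by (apply Rmult_le_compat_l; lra).
    assert (Rabs v2 * Rabs a2 <= Rabs v2 * e') by (apply Rmult_le_compat_l; lra).
    assert (eps = e' * (Rabs v1 + Rabs v2 + 1)) by (unfold e'; field; lra).
    nra.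
  - intros s Hs. apply is_lim_seq_Reals. apply (Lpq (h + s * v1, k + s * v2)). apply HB; auto.
  - intros n s Hs. apply is_derive_Reals. apply Sp_line.
  - unfold Boule; simpl. rewrite Rminus_0_r, Rabs_R0. apply Hd.
Qed.

End PS2.

Lemma loc_of (x : R) (P : R -> Prop) :
  (exists e, 0 < e /\ forall t, Rabs (t - x) < e -> P t) -> locally x P.
Proof. intros [e [He H]]. exists (mkposreal e He). intros t Ht. apply H. exact Ht. Qed.

Lemma isd_shift (F : R -> R) (u L : R) : is_derive (fun s => F (u + s)) 0 L -> is_derive F u L.
Proof.
  intros H.
  assert (H2 := isd_comp (fun s => F (u + s)) (fun w => w + - u) u L 1).
  simpl in H2. eapply is_derive_ext. 2: eapply isd_eq. 2: apply H2.
  - intros t. simpl. f_equal. ring.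
  - replace (u + - u) with 0 by ring. exact H.
  - apply isd_eq with (1 + 0). apply isd_plus. apply (is_derive_id u). apply isd_const. ring.
  - ring.
Qed.

Definition LocFam (G : R -> R -> R) (x0 y0 : R) : Prop :=
  exists (A : nat -> nat -> R -> R -> R) (rho : R), 0 < rho /\
  (forall x y, Rabs (x - x0) < rho -> Rabs (y - y0) < rho -> G x y = A 0%nat 0%nat x y) /\
  (forall p q x y v1 v2, Rabs (x - x0) < rho -> Rabs (y - y0) < rho ->
     is_derive (fun s => A p q (x + s * v1) (y + s * v2)) 0
       (v1 * A (S p) q x y + v2 * A p (S q) x y)) /\
  (forall p q, exists K, forall x y, Rabs (x - x0) < rho -> Rabs (y - y0) < rho ->
     Rabs (A p q x y) <= K).

Lemma locfam_of_series (G : R -> R -> R) x0 y0 (c : nat -> nat -> R) r M :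
  0 < r ->
  (forall N, S2 (fun i j => Rabs (c i j) * r ^ i * r ^ j) N <= M) ->
  (forall x y, Rabs (x - x0) < r -> Rabs (y - y0) < r ->
     is_lim_seq (S2 (fun i j => c i j * (x - x0) ^ i * (y - y0) ^ j)) (G x y)) ->
  LocFam G x0 y0.
Proof.
  intros Hr HM Hc.
  exists (fun p q x y => Arel c p q (x - x0) (y - y0)), (r / 2). split; [lra|split; [|split]].
  - intros x y Hx Hy.
    destruct (unif_pq c r M Hr HM 0 0) as [H1 _].
    assert (HB : Box r (x - x0, y - y0)) by (unfold Box; simpl; lra).
    specialize (H1 _ HB). simpl in H1.
    unfold Arel. unfold LimR.
    assert (E : Sp c 0 0 (x - x0) (y - y0) = S2 (fun i j => c i j * (x - x0) ^ i * (y - y0) ^ j)).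
    { apply FunctionalExtensionality.functional_extensionality. intros N. unfold Sp, S2.
      apply sum_eq. intros i _. apply sum_eq. intros j _. unfold Tm, ee. simpl.
      rewrite !Nat.sub_0_r. ring. }
    rewrite E. rewrite (is_lim_seq_unique _ _ (Hc x y ltac:(lra) ltac:(lra))). reflexivity.
  - intros p q x y v1 v2 Hx Hy.
    eapply is_derive_ext. 2: apply (Arel_line c r M Hr HM p q (x - x0) (y - y0) v1 v2); auto.
    intros t. simpl. f_equal; ring.
  - intros p q. destruct (unif_pq c r M Hr HM p q) as [_ [_ [L HL]]].
    exists L. intros x y Hx Hy. apply (HL (x - x0, y - y0)). unfold Box; simpl; lra.
Qed.

Lemma loc_ball (x c rho : R) : Rabs (x - c) < rho -> locally x (fun u => Rabs (u - c) < rho).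
Proof.
  intros Hx. apply loc_of. exists (rho - Rabs (x - c)). split. lra.
  intros t Ht. replace (t - c) with ((t - x) + (x - c)) by ring.
  eapply Rle_lt_trans. apply Rabs_triang. lra.
Qed.

Lemma lip1 (f f' : R -> R) a b K :
  (forall u, Rmin a b <= u <= Rmax a b -> is_derive f u (f' u) /\ Rabs (f' u) <= K) ->
  Rabs (f b - f a) <= K * Rabs (b - a).
Proof.
  intros H.
  destruct (Rtotal_order a b) as [Hab|[Hab|Hab]].
  - rewrite Rmin_left, Rmax_right in H by lra.
    destruct (MVT_cor2 f f' a b Hab) as [c [Hc1 Hc2]].
    { intros c Hc. apply is_derive_Reals. apply H; auto. }
    rewrite Hc1, Rabs_mult. apply Rmult_le_compat_r. apply Rabs_pos. apply H; lra.
  - subst. rewrite !Rminus_diag, Rabs_R0. rewrite Rmult_0_r. lra.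
  - rewrite Rmin_right, Rmax_left in H by lra.
    destruct (MVT_cor2 f f' b a Hab) as [c [Hc1 Hc2]].
    { intros c Hc. apply is_derive_Reals. apply H; auto. }
    rewrite <- Rabs_Ropp, Ropp_minus_distr, Hc1, Rabs_mult.
    rewrite <- (Rabs_Ropp (b - a)), Ropp_minus_distr.
    apply Rmult_le_compat_r. apply Rabs_pos. apply H; lra.
Qed.

Section LF.
Variable G : R -> R -> R.
Variables x0 y0 : R.
Variable A : nat -> nat -> R -> R -> R.
Variable rho : R.
Hypothesis Hrho : 0 < rho.
Hypothesis HG : forall x y, Rabs (x - x0) < rho -> Rabs (y - y0) < rho -> G x y = A 0%nat 0%nat x y.
Hypothesis HL : forall p q x y v1 v2, Rabs (x - x0) < rho -> Rabs (y - y0) < rho ->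
     is_derive (fun s => A p q (x + s * v1) (y + s * v2)) 0
       (v1 * A (S p) q x y + v2 * A p (S q) x y).
Hypothesis HK : forall p q, exists K, forall x y, Rabs (x - x0) < rho -> Rabs (y - y0) < rho ->
     Rabs (A p q x y) <= K.

Lemma dx_A p q x y : Rabs (x - x0) < rho -> Rabs (y - y0) < rho ->
  is_derive (fun u => A p q u y) x (A (S p) q x y).
Proof.
  intros Hx Hy. apply isd_shift. eapply is_derive_ext. 2: eapply isd_eq. 2: apply (HL p q x y 1 0 Hx Hy).
  intros t; simpl; f_equal; ring. ring.
Qed.

Lemma dy_A p q x y : Rabs (x - x0) < rho -> Rabs (y - y0) < rho ->
  is_derive (fun v => A p q x v) y (A p (S q) x y).
Proof.
  intros Hx Hy. apply isd_shift. eapply is_derive_ext. 2: eapply isd_eq. 2: apply (HL p q x y 0 1 Hx Hy).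
  intros t; simpl; f_equal; ring. ring.
Qed.

Lemma D1_eq x y : Rabs (x - x0) < rho -> Rabs (y - y0) < rho -> D1 G x y = A 1 0 x y.
Proof.
  intros Hx Hy. unfold D1.
  rewrite (Derive_ext_loc (fun u => G u y) (fun u => A 0 0 u y)).
  apply is_derive_unique. apply dx_A; auto.
  eapply filter_imp. 2: apply (loc_ball x x0 rho Hx). intros u Hu. apply HG; auto.
Qed.

Lemma D2_eq x y : Rabs (x - x0) < rho -> Rabs (y - y0) < rho -> D2 G x y = A 0 1 x y.
Proof.
  intros Hx Hy. unfold D2.
  rewrite (Derive_ext_loc (fun v => G x v) (fun v => A 0 0 x v)).
  apply is_derive_unique. apply dy_A; auto.
  eapply filter_imp. 2: apply (loc_ball y y0 rho Hy). intros u Hu. apply HG; auto.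
Qed.


Lemma fxx_eq x y : Rabs (x - x0) < rho -> Rabs (y - y0) < rho -> fxx G x y = A 2 0 x y.
Proof.
  intros Hx Hy. unfold fxx. unfold D1 at 1.
  rewrite (Derive_ext_loc (fun u => D1 G u y) (fun u => A 1 0 u y)).
  apply is_derive_unique. apply dx_A; auto.
  eapply filter_imp. 2: apply (loc_ball x x0 rho Hx). intros u Hu. apply D1_eq; auto.
Qed.

Lemma fxy_eq x y : Rabs (x - x0) < rho -> Rabs (y - y0) < rho -> fxy G x y = A 1 1 x y.
Proof.
  intros Hx Hy. unfold fxy. unfold D2 at 1.
  rewrite (Derive_ext_loc (fun v => D1 G x v) (fun v => A 1 0 x v)).
  apply is_derive_unique. apply dy_A; auto.
  eapply filter_imp. 2: apply (loc_ball y y0 rho Hy). intros u Hu. apply D1_eq; auto.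
Qed.

Lemma fyy_eq x y : Rabs (x - x0) < rho -> Rabs (y - y0) < rho -> fyy G x y = A 0 2 x y.
Proof.
  intros Hx Hy. unfold fyy. unfold D2 at 1.
  rewrite (Derive_ext_loc (fun v => D2 G x v) (fun v => A 0 1 x v)).
  apply is_derive_unique. apply dy_A; auto.
  eapply filter_imp. 2: apply (loc_ball y y0 rho Hy). intros u Hu. apply D2_eq; auto.
Qed.

Lemma small_step (s v1 v2 : R) : Rabs s < rho / (Rabs v1 + Rabs v2 + 1) ->
  Rabs (s * v1) < rho /\ Rabs (s * v2) < rho.
Proof.
  intros Hs. assert (0 <= Rabs v1) by apply Rabs_pos. assert (0 <= Rabs v2) by apply Rabs_pos.
  assert (0 <= Rabs s) by apply Rabs_pos.
  assert (Hs1 : Rabs s * (Rabs v1 + Rabs v2 + 1) < rho).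
  { apply Rmult_lt_reg_r with (/ (Rabs v1 + Rabs v2 + 1)).
    apply Rinv_0_lt_compat; lra. rewrite Rmult_assoc, Rinv_r by lra.
    unfold Rdiv in Hs. lra. }
  rewrite !Rabs_mult. split; nra.
Qed.

Lemma psi_deriv v1 v2 : exists e, 0 < e /\ forall s, Rabs s < e ->
  is_derive (fun s => G (x0 + s * v1) (y0 + s * v2)) s
    (v1 * A 1 0 (x0 + s * v1) (y0 + s * v2) + v2 * A 0 1 (x0 + s * v1) (y0 + s * v2)).
Proof.
  assert (He : 0 < rho / (Rabs v1 + Rabs v2 + 1)).
  { apply Rdiv_lt_0_compat. lra. assert (0 <= Rabs v1) by apply Rabs_pos.
    assert (0 <= Rabs v2) by apply Rabs_pos. lra. }
  exists (rho / (Rabs v1 + Rabs v2 + 1)). split; auto. intros s Hs.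
  destruct (small_step s v1 v2 Hs) as [H1 H2].
  apply is_derive_ext_loc with (fun s => A 0 0 (x0 + s * v1) (y0 + s * v2)).
  - eapply filter_imp. 2: apply (loc_ball s 0 _ ltac:(rewrite Rminus_0_r; exact Hs)).
    intros u Hu. simpl in Hu. rewrite Rminus_0_r in Hu. destruct (small_step u v1 v2 Hu).
    symmetry. apply HG; replace (x0 + u * v1 - x0) with (u * v1) by ring;
      replace (y0 + u * v2 - y0) with (u * v2) by ring; auto.
  - apply (isd_shift (fun s => A 0 0 (x0 + s * v1) (y0 + s * v2)) s).
    eapply is_derive_ext. 2: apply HL.
    + intros t. simpl. f_equal; ring.
    + replace (x0 + s * v1 - x0) with (s * v1) by ring. auto.
    + replace (y0 + s * v2 - y0) with (s * v2) by ring. auto.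
Qed.

Lemma psi2 v1 v2 :
  is_derive (fun s => v1 * A 1 0 (x0 + s * v1) (y0 + s * v2) + v2 * A 0 1 (x0 + s * v1) (y0 + s * v2)) 0
    (v1 ^ 2 * A 2 0 x0 y0 + 2 * v1 * v2 * A 1 1 x0 y0 + v2 ^ 2 * A 0 2 x0 y0).
Proof.
  assert (H0 : Rabs (x0 - x0) < rho) by (rewrite Rminus_diag, Rabs_R0; lra).
  assert (H0' : Rabs (y0 - y0) < rho) by (rewrite Rminus_diag, Rabs_R0; lra).
  eapply isd_eq. apply isd_plus.
  apply is_derive_scal. apply (HL 1 0 x0 y0 v1 v2 H0 H0').
  apply is_derive_scal. apply (HL 0 1 x0 y0 v1 v2 H0 H0').
  simpl. ring.
Qed.

Lemma cont_G : forall eps, 0 < eps -> exists d, 0 < d /\ forall x y,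
  Rabs (x - x0) < d -> Rabs (y - y0) < d -> Rabs (G x y - G x0 y0) < eps.
Proof.
  intros eps Heps.
  destruct (HK 1 0) as [K1 HK1]. destruct (HK 0 1) as [K2 HK2].
  set (K := Rabs K1 + Rabs K2 + 1).
  assert (HKp : 0 < K) by (unfold K; assert (0 <= Rabs K1) by apply Rabs_pos; assert (0 <= Rabs K2) by apply Rabs_pos; lra).
  exists (Rmin (rho / 2) (eps / (2 * K))). split.
  { apply Rmin_glb_lt. lra. apply Rdiv_lt_0_compat; lra. }
  intros x y Hx Hy.
  assert (Hx1 : Rabs (x - x0) < rho / 2) by (eapply Rlt_le_trans; [exact Hx| apply Rmin_l]).
  assert (Hy1 : Rabs (y - y0) < rho / 2) by (eapply Rlt_le_trans; [exact Hy| apply Rmin_l]).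
  assert (Hx2 : Rabs (x - x0) < eps / (2 * K)) by (eapply Rlt_le_trans; [exact Hx| apply Rmin_r]).
  assert (Hy2 : Rabs (y - y0) < eps / (2 * K)) by (eapply Rlt_le_trans; [exact Hy| apply Rmin_r]).
  assert (H00 : Rabs (x0 - x0) < rho) by (rewrite Rminus_diag, Rabs_R0; lra).
  assert (H00' : Rabs (y0 - y0) < rho) by (rewrite Rminus_diag, Rabs_R0; lra).
  rewrite (HG x y) by lra. rewrite (HG x0 y0) by auto.
  assert (L1 : Rabs (A 0 0 x y - A 0 0 x0 y) <= K * Rabs (x - x0)).
  { apply (lip1 (fun u => A 0 0 u y) (fun u => A 1 0 u y) x0 x K).
    intros u Hu. assert (Rabs (u - x0) < rho).
    { apply Rabs_def1; [destruct (Rle_dec x0 x)|destruct (Rle_dec x0 x)];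
      [rewrite Rmax_right in Hu by lra|rewrite Rmax_left in Hu by lra|
       rewrite Rmin_left in Hu by lra|rewrite Rmin_right in Hu by lra];
      apply Rabs_def2 in Hx1; lra. }
    split. apply dx_A; lra.
    eapply Rle_trans. apply HK1; lra. unfold K. assert (K1 <= Rabs K1) by apply Rle_abs.
    assert (0 <= Rabs K2) by apply Rabs_pos. lra. }
  assert (L2 : Rabs (A 0 0 x0 y - A 0 0 x0 y0) <= K * Rabs (y - y0)).
  { apply (lip1 (fun v => A 0 0 x0 v) (fun v => A 0 1 x0 v) y0 y K).
    intros u Hu. assert (Rabs (u - y0) < rho).
    { apply Rabs_def1; [destruct (Rle_dec y0 y)|destruct (Rle_dec y0 y)];
      [rewrite Rmax_right in Hu by lra|rewrite Rmax_left in Hu by lra|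
       rewrite Rmin_left in Hu by lra|rewrite Rmin_right in Hu by lra];
      apply Rabs_def2 in Hy1; lra. }
    split. apply dy_A; lra.
    eapply Rle_trans. apply HK2; lra. unfold K. assert (K2 <= Rabs K2) by apply Rle_abs.
    assert (0 <= Rabs K1) by apply Rabs_pos. lra. }
  replace (A 0 0 x y - A 0 0 x0 y0) with ((A 0 0 x y - A 0 0 x0 y) + (A 0 0 x0 y - A 0 0 x0 y0)) by ring.
  eapply Rle_lt_trans. apply Rabs_triang.
  assert (K * Rabs (x - x0) < eps / 2).
  { replace (eps / 2) with (K * (eps / (2 * K))) by (field; lra). apply Rmult_lt_compat_l; auto. }
  assert (K * Rabs (y - y0) < eps / 2).
  { replace (eps / 2) with (K * (eps / (2 * K))) by (field; lra). apply Rmult_lt_compat_l; auto. }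
  lra.
Qed.

End LF.

Lemma sdt1 (psi psi' : R -> R) e D : 0 < e ->
  (forall s, Rabs s < e -> is_derive psi s (psi' s)) ->
  is_derive psi' 0 D ->
  (forall s, Rabs s < e -> psi s <= psi 0) -> D <= 0.
Proof.
  intros He Hd Hd2 Hmax.
  assert (H0 : psi' 0 = 0).
  { assert (Hd0 : derivable_pt_lim psi 0 (psi' 0)) by (apply is_derive_Reals, Hd; rewrite Rabs_R0; lra).
    assert (Hm := deriv_maximum psi (-e) e 0 (exist _ (psi' 0) Hd0) ltac:(lra) ltac:(lra)).
    simpl in Hm. apply Hm. intros x Hx1 Hx2. apply Hmax. apply Rabs_def1; lra. }
  destruct (Rle_or_lt D 0) as [|HD]; auto. exfalso.
  apply is_derive_Reals in Hd2. destruct (Hd2 (D / 2) ltac:(lra)) as [d Hdel].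
  set (s := Rmin d e / 2).
  assert (Hs0 : 0 < s) by (unfold s; assert (0 < Rmin d e) by (apply Rmin_glb_lt; [apply cond_pos|lra]); lra).
  assert (Hsd : s < d) by (unfold s; assert (Rmin d e <= d) by apply Rmin_l; assert (0 < Rmin d e) by (apply Rmin_glb_lt; [apply cond_pos|lra]); lra).
  assert (Hse : s < e) by (unfold s; assert (Rmin d e <= e) by apply Rmin_r; assert (0 < Rmin d e) by (apply Rmin_glb_lt; [apply cond_pos|lra]); lra).
  destruct (MVT_cor2 psi psi' 0 s Hs0) as [c [Hc1 Hc2]].
  { intros c Hc. apply is_derive_Reals, Hd. apply Rabs_def1; lra. }
  assert (Hpc : 0 < psi' c).
  { specialize (Hdel c ltac:(lra) ltac:(rewrite Rabs_right; lra)).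
    rewrite Rplus_0_l, H0, Rminus_0_r in Hdel. apply Rabs_def2 in Hdel.
    destruct Hdel as [_ Hdel].
    assert (0 < psi' c / c) by lra.
    assert (psi' c = (psi' c / c) * c) by (field; lra). nra. }
  assert (psi s <= psi 0) by (apply Hmax; rewrite Rabs_right; lra).
  nra.
Qed.

Lemma hess_nsd A B C : (forall v1 v2, v1 ^ 2 * A + 2 * v1 * v2 * B + v2 ^ 2 * C <= 0) ->
  A <= 0 /\ C <= 0 /\ B ^ 2 <= A * C.
Proof.
  intros H.
  assert (HA := H 1 0). assert (HC := H 0 1).
  assert (HA' : A <= 0) by nra. assert (HC' : C <= 0) by nra.
  split; auto; split; auto.
  destruct (Rlt_or_le A 0) as [Hlt|Hge].
  - assert (H3 := H B (- A)). nra.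
  - assert (A = 0) by lra. subst.
    destruct (Req_dec B 0). subst. nra.
    assert (H4 := H ((1 - C) / (2 * B)) 1).
    replace (((1 - C) / (2 * B)) ^ 2 * 0 + 2 * ((1 - C) / (2 * B)) * 1 * B + 1 ^ 2 * C) with 1 in H4
      by (field; auto). lra.
Qed.

Definition Epde (t a b c : R) : Prop := 0 <= b ^ 2 - a * c /\ a + c = t * sqrt (b ^ 2 - a * c).

Lemma isd_minus (f g : R -> R) (x a b : R) : is_derive f x a -> is_derive g x b ->
  is_derive (fun t => f t - g t) x (a - b).
Proof.
  intros Hf Hg. apply isd_eq with (a + -1 * b).
  - eapply is_derive_ext. 2: apply isd_plus. 2: apply Hf. 2: apply (is_derive_scal g x (-1) b Hg).
    intros; simpl; ring.
  - ring.
Qed.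

Lemma small_step' (e s v1 v2 : R) : Rabs s < e / (Rabs v1 + Rabs v2 + 1) ->
  Rabs (s * v1) < e /\ Rabs (s * v2) < e.
Proof.
  intros Hs. assert (0 <= Rabs v1) by apply Rabs_pos. assert (0 <= Rabs v2) by apply Rabs_pos.
  assert (0 <= Rabs s) by apply Rabs_pos.
  assert (Hs1 : Rabs s * (Rabs v1 + Rabs v2 + 1) < e).
  { apply Rmult_lt_reg_r with (/ (Rabs v1 + Rabs v2 + 1)).
    apply Rinv_0_lt_compat; lra. rewrite Rmult_assoc, Rinv_r by lra.
    unfold Rdiv in Hs. lra. }
  rewrite !Rabs_mult. split; nra.
Qed.

Lemma interior_contra (F Gg : R -> R -> R) x0 y0 dl t :
  LocFam F x0 y0 -> LocFam Gg x0 y0 -> 0 < dl ->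
  (exists e, 0 < e /\ forall x y, Rabs (x - x0) < e -> Rabs (y - y0) < e ->
     F x y + dl * (x ^ 2 + y ^ 2) - Gg x y <= F x0 y0 + dl * (x0 ^ 2 + y0 ^ 2) - Gg x0 y0) ->
  Epde t (fxx F x0 y0) (fxy F x0 y0) (fyy F x0 y0) ->
  Epde t (fxx Gg x0 y0) (fxy Gg x0 y0) (fyy Gg x0 y0) -> False.
Proof.
  intros [AF [rF [HrF [HGF [HLF HKF]]]]] [AG [rG [HrG [HGG [HLG HKG]]]]] Hdl [e [He Hmax]] EF EG.
  assert (H00F : Rabs (x0 - x0) < rF) by (rewrite Rminus_diag, Rabs_R0; lra).
  assert (H00F' : Rabs (y0 - y0) < rF) by (rewrite Rminus_diag, Rabs_R0; lra).
  assert (H00G : Rabs (x0 - x0) < rG) by (rewrite Rminus_diag, Rabs_R0; lra).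
  assert (H00G' : Rabs (y0 - y0) < rG) by (rewrite Rminus_diag, Rabs_R0; lra).
  rewrite (fxx_eq F x0 y0 AF rF HGF HLF x0 y0 H00F H00F'),
          (fxy_eq F x0 y0 AF rF HGF HLF x0 y0 H00F H00F'),
          (fyy_eq F x0 y0 AF rF HGF HLF x0 y0 H00F H00F') in EF.
  rewrite (fxx_eq Gg x0 y0 AG rG HGG HLG x0 y0 H00G H00G'),
          (fxy_eq Gg x0 y0 AG rG HGG HLG x0 y0 H00G H00G'),
          (fyy_eq Gg x0 y0 AG rG HGG HLG x0 y0 H00G H00G') in EG.
  assert (Hv : forall v1 v2, v1 ^ 2 * (AF 2%nat 0%nat x0 y0 + 2 * dl - AG 2%nat 0%nat x0 y0)
     + 2 * v1 * v2 * (AF 1%nat 1%nat x0 y0 - AG 1%nat 1%nat x0 y0)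
     + v2 ^ 2 * (AF 0%nat 2%nat x0 y0 + 2 * dl - AG 0%nat 2%nat x0 y0) <= 0).
  { intros v1 v2.
    destruct (psi_deriv F x0 y0 AF rF HrF HGF HLF v1 v2) as [e1 [He1 Hd1]].
    destruct (psi_deriv Gg x0 y0 AG rG HrG HGG HLG v1 v2) as [e2 [He2 Hd2]].
    assert (Hpos : 0 < Rabs v1 + Rabs v2 + 1) by (assert (0 <= Rabs v1) by apply Rabs_pos; assert (0 <= Rabs v2) by apply Rabs_pos; lra).
    set (e3 := e / (Rabs v1 + Rabs v2 + 1)).
    assert (He3 : 0 < e3) by (apply Rdiv_lt_0_compat; lra).
    apply (sdt1 (fun s => F (x0 + s * v1) (y0 + s * v2) + dl * ((x0 + s * v1) ^ 2 + (y0 + s * v2) ^ 2)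
                          - Gg (x0 + s * v1) (y0 + s * v2))
      (fun s => (v1 * AF 1%nat 0%nat (x0 + s * v1) (y0 + s * v2) + v2 * AF 0%nat 1%nat (x0 + s * v1) (y0 + s * v2))
        + dl * (2 * (x0 + s * v1) * v1 + 2 * (y0 + s * v2) * v2)
        - (v1 * AG 1%nat 0%nat (x0 + s * v1) (y0 + s * v2) + v2 * AG 0%nat 1%nat (x0 + s * v1) (y0 + s * v2)))
      (Rmin e1 (Rmin e2 e3))).
    - apply Rmin_glb_lt; auto. apply Rmin_glb_lt; auto.
    - intros s Hs.
      assert (Hs1 : Rabs s < e1) by (eapply Rlt_le_trans; [exact Hs|apply Rmin_l]).
      assert (Hs2 : Rabs s < e2) by (eapply Rlt_le_trans; [exact Hs|eapply Rle_trans; [apply Rmin_r|apply Rmin_l]]).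
      apply isd_minus. apply isd_plus. apply Hd1; auto.
      apply is_derive_scal. eapply isd_eq. apply isd_plus.
      apply is_derive_pow. apply isd_lin. apply is_derive_pow. apply isd_lin. simpl. ring.
      apply Hd2; auto.
    - eapply isd_eq. apply isd_minus. apply isd_plus. apply (psi2 x0 y0 AF rF HrF HLF v1 v2).
      apply is_derive_scal. apply isd_plus.
      apply isd_mult. apply isd_mult. apply isd_const. apply isd_lin. apply isd_const.
      apply isd_mult. apply isd_mult. apply isd_const. apply isd_lin. apply isd_const.
      apply (psi2 x0 y0 AG rG HrG HLG v1 v2).
      simpl. ring.
    - intros s Hs.
      assert (Hs3 : Rabs s < e3) by (eapply Rlt_le_trans; [exact Hs|eapply Rle_trans; [apply Rmin_r|apply Rmin_r]]).
      destruct (small_step' e s v1 v2 Hs3) as [Hx Hy].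
      replace (x0 + 0 * v1) with x0 by ring. replace (y0 + 0 * v2) with y0 by ring.
      apply Hmax. replace (x0 + s * v1 - x0) with (s * v1) by ring; auto.
      replace (y0 + s * v2 - y0) with (s * v2) by ring; auto. }
  destruct (hess_nsd _ _ _ Hv) as [Ha [Hc Hb]].
  set (a1 := AF 2%nat 0%nat x0 y0) in *. set (b1 := AF 1%nat 1%nat x0 y0) in *. set (c1 := AF 0%nat 2%nat x0 y0) in *.
  set (a2 := AG 2%nat 0%nat x0 y0) in *. set (b2 := AG 1%nat 1%nat x0 y0) in *. set (c2 := AG 0%nat 2%nat x0 y0) in *.
  destruct EF as [EF1 EF2]. destruct EG as [EG1 EG2].
  assert (K := alg_key t a1 b1 c1 (a2 - a1) (b2 - b1) (c2 - c1) EF1 EF2).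
  replace (b1 + (b2 - b1)) with b2 in K by ring.
  replace (a1 + (a2 - a1)) with a2 in K by ring.
  replace (c1 + (c2 - c1)) with c2 in K by ring.
  assert (Hq : (b2 - b1) ^ 2 <= (a2 - a1) * (c2 - c1)).
  { replace ((b2 - b1) ^ 2) with ((b1 - b2) ^ 2) by ring.
    assert (E : (a1 + 2 * dl - a2) * (c1 + 2 * dl - c2) =
      (a2 - a1) * (c2 - c1) - 2 * dl * ((a2 - a1) + (c2 - c1) - 2 * dl)) by ring.
    assert (0 <= 2 * dl * ((a2 - a1) + (c2 - c1) - 2 * dl)) by (apply Rmult_le_pos; lra).
    lra. }
  specialize (K EG1 EG2 ltac:(lra) ltac:(lra) Hq). lra.
Qed.

Lemma cont_pt_iff (f : R -> R) x : continuity_pt f x <->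
  (forall eps, 0 < eps -> exists d, 0 < d /\ forall y, Rabs (y - x) < d -> Rabs (f y - f x) < eps).
Proof.
  split.
  - intros H eps He. destruct (H eps He) as [d [Hd Hd']]. exists d. split; auto.
    intros y Hy. destruct (Req_dec y x). subst. rewrite Rminus_diag, Rabs_R0; lra.
    apply (Hd' y). split. split. exact I. auto. exact Hy.
  - intros H eps He. destruct (H eps He) as [d [Hd Hd']]. exists d. split; auto.
    intros y [_ Hy]. apply Hd'. exact Hy.
Qed.

Lemma lim0_bounded (u : nat -> R) : is_lim_seq u 0 -> exists B, forall n, Rabs (u n) <= B.
Proof.
  intros H. apply is_lim_seq_Reals in H. destruct (H 1 ltac:(lra)) as [N HN].
  exists (1 + sum_f_R0 (fun k => Rabs (u k)) N). intros n.
  assert (0 <= sum_f_R0 (fun k => Rabs (u k)) N) by (apply cond_pos_sum; intros; apply Rabs_pos).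
  destruct (Compare_dec.le_lt_dec N n) as [Hn|Hn].
  - specialize (HN n Hn). unfold R_dist in HN. rewrite Rminus_0_r in HN. lra.
  - assert (Rabs (u n) <= sum_f_R0 (fun k => Rabs (u k)) N).
    { apply (sum_term_le (fun k => Rabs (u k))). intros; apply Rabs_pos. lia. }
    lra.
Qed.

Lemma analytic1_cont g : analytic1 g -> forall a, continuity_pt g a.
Proof.
  intros Hg a. destruct (Hg a) as [c [r [Hr Hc]]].
  assert (HP : forall h, Rabs h < r -> PSeries c h = g (a + h)).
  { intros h Hh. specialize (Hc (a + h) ltac:(replace (a + h - a) with h by ring; auto)).
    replace (a + h - a) with h in Hc by ring.
    unfold PSeries, Series. replace (g (a + h)) with (real (Finite (g (a + h)))) by reflexivity.
    f_equal. apply is_lim_seq_unique. eapply is_lim_seq_ext. 2: apply Hc.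
    intros n. rewrite sum_n_Reals. apply sum_eq. intros; ring. }
  assert (Hrad : Rbar_lt 0 (CV_radius c)).
  { destruct (CV_radius_bounded c) as [Hub _].
    assert (Hle : Rbar_le (r / 2) (CV_radius c)).
    { apply Hub. specialize (Hc (a + r / 2) ltac:(replace (a + r / 2 - a) with (r/2) by ring; rewrite Rabs_right; lra)).
      replace (a + r / 2 - a) with (r/2) in Hc by ring.
      assert (Hs : ex_series (fun i => c i * (r / 2) ^ i)).
      { exists (g (a + r / 2)). unfold is_series.
        change (is_lim_seq (sum_n (fun i => c i * (r / 2) ^ i)) (g (a + r / 2))).
        eapply is_lim_seq_ext. 2: apply Hc. intros n. rewrite sum_n_Reals. reflexivity. }
      apply ex_series_lim_0 in Hs. apply lim0_bounded in Hs. exact Hs. }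
    destruct (CV_radius c) as [rc| |]; simpl in *; auto; lra. }
  assert (Hcont : continuity_pt (PSeries c) 0) by (apply PSeries_continuity; rewrite Rabs_R0; auto).
  apply cont_pt_iff. intros eps He.
  destruct (proj1 (cont_pt_iff _ _) Hcont eps He) as [d [Hd Hd']].
  exists (Rmin d r). split. apply Rmin_glb_lt; auto. intros y Hy.
  assert (Hy1 : Rabs (y - a) < d) by (eapply Rlt_le_trans; [exact Hy|apply Rmin_l]).
  assert (Hy2 : Rabs (y - a) < r) by (eapply Rlt_le_trans; [exact Hy|apply Rmin_r]).
  replace (g y) with (g (a + (y - a))) by (f_equal; ring).
  replace (g a) with (g (a + 0)) by (f_equal; ring).
  rewrite <- (HP (y - a) Hy2), <- (HP 0) by (rewrite Rabs_R0; lra).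
  apply Hd'. rewrite Rminus_0_r. auto.
Qed.

Lemma per_n (g1 g2 : R -> R) T : (forall s, g1 (s + T) = g1 s /\ g2 (s + T) = g2 s) ->
  forall n s, g1 (s + INR n * T) = g1 s /\ g2 (s + INR n * T) = g2 s.
Proof.
  intros Hp n. induction n; intros s.
  - simpl. rewrite Rmult_0_l, Rplus_0_r. auto.
  - rewrite S_INR. replace (s + (INR n + 1) * T) with ((s + INR n * T) + T) by ring.
    destruct (Hp (s + INR n * T)) as [A1 A2]. rewrite A1, A2. apply IHn.
Qed.

Lemma decomp_pos T : 0 < T -> forall n s, 0 <= s <= INR n * T ->
  exists s0 m, 0 <= s0 <= T /\ s = s0 + INR m * T.
Proof.
  intros HT n. induction n; intros s Hs.
  - simpl in Hs. exists s, 0%nat. simpl. split. lra. ring.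
  - rewrite S_INR in Hs. destruct (Rle_or_lt s T).
    + exists s, 0%nat. simpl. split. lra. ring.
    + destruct (IHn (s - T) ltac:(lra)) as [s0 [m [Hs0 Hm]]].
      exists s0, (S m). split; auto. rewrite S_INR. lra.
Qed.

Lemma per_reduce (g1 g2 : R -> R) T : 0 < T ->
  (forall s, g1 (s + T) = g1 s /\ g2 (s + T) = g2 s) ->
  forall s, exists s0, 0 <= s0 <= T /\ g1 s = g1 s0 /\ g2 s = g2 s0.
Proof.
  intros HT Hp s.
  destruct (Rle_or_lt 0 s) as [Hs|Hs].
  - destruct (nfloor_ex (s / T)) as [n Hn]. apply Rdiv_le_0_compat; lra.
    destruct (decomp_pos T HT (S n) s) as [s0 [m [Hs0 Hm]]].
    { split; auto. rewrite S_INR. destruct Hn as [_ Hn].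
      apply Rmult_lt_compat_r with (r := T) in Hn; auto. unfold Rdiv in Hn.
      rewrite Rmult_assoc, Rinv_l, Rmult_1_r in Hn by lra. lra. }
    exists s0. split; auto. subst s. apply per_n; auto.
  - destruct (nfloor_ex (- s / T)) as [n Hn]. apply Rdiv_le_0_compat; lra.
    destruct (decomp_pos T HT (S n) (- s)) as [s0 [m [Hs0 Hm]]].
    { split. lra. rewrite S_INR. destruct Hn as [_ Hn].
      apply Rmult_lt_compat_r with (r := T) in Hn; auto. unfold Rdiv in Hn.
      rewrite Rmult_assoc, Rinv_l, Rmult_1_r in Hn by lra. lra. }
    exists (T - s0). split. lra.
    destruct (per_n g1 g2 T Hp (S m) s) as [A1 A2].
    replace (s + INR (S m) * T) with (T - s0) in A1, A2 by (rewrite S_INR; lra).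
    split; symmetry; auto.
Qed.

Lemma Om_open Om : jordan_analytic_domain Om ->
  forall x y, Om x y -> exists e, 0 < e /\ forall x' y', Rabs (x' - x) < e -> Rabs (y' - y) < e -> Om x' y'.
Proof.
  intros [g1 [g2 [T [HT [Ha1 [Ha2 [Hper [Hinj [Hder Hrest]]]]]]]]]. cbv zeta in Hrest.
  destruct Hrest as [Hne [Hbd [Hdisj Hiff]]].
  intros x y Hxy.
  set (d := fun s => Rabs (g1 s - x) + Rabs (g2 s - y)).
  assert (Hdc : forall s, continuity_pt d s).
  { intros s. unfold d. apply continuity_pt_plus.
    - apply (continuity_pt_comp (fun s => g1 s - x) Rabs). apply continuity_pt_minus.
      apply analytic1_cont; auto. apply continuity_pt_const. intros a b; reflexivity.
      apply Rcontinuity_abs.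
    - apply (continuity_pt_comp (fun s => g2 s - y) Rabs). apply continuity_pt_minus.
      apply analytic1_cont; auto. apply continuity_pt_const. intros a b; reflexivity.
      apply Rcontinuity_abs. }
  destruct (continuity_ab_min d 0 T ltac:(lra) (fun c _ => Hdc c)) as [mx [Hmx Hmx']].
  set (e := d mx).
  assert (He : 0 < e).
  { unfold e, d. destruct (Req_dec (Rabs (g1 mx - x) + Rabs (g2 mx - y)) 0) as [H0|H0].
    - exfalso. apply (Hdisj x y Hxy). exists mx.
      assert (0 <= Rabs (g1 mx - x)) by apply Rabs_pos. assert (0 <= Rabs (g2 mx - y)) by apply Rabs_pos.
      assert (Z1 : Rabs (g1 mx - x) = 0) by lra. assert (Z2 : Rabs (g2 mx - y) = 0) by lra.
      split. apply Rabs_eq_0 in Z1. lra. apply Rabs_eq_0 in Z2. lra.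
    - assert (0 <= Rabs (g1 mx - x)) by apply Rabs_pos. assert (0 <= Rabs (g2 mx - y)) by apply Rabs_pos. lra. }
  assert (Hfar : forall x'' y'', Rabs (x'' - x) < e / 2 -> Rabs (y'' - y) < e / 2 ->
     ~ (exists s, x'' = g1 s /\ y'' = g2 s)).
  { intros x'' y'' H1 H2 [s [Hs1 Hs2]].
    destruct (per_reduce g1 g2 T HT Hper s) as [s0 [Hs0 [E1 E2]]].
    specialize (Hmx s0 Hs0). unfold d in Hmx. fold e in Hmx.
    rewrite Hs1, E1 in H1. rewrite Hs2, E2 in H2. unfold e, d in *. lra. }
  exists (e / 2). split. lra. intros x' y' Hx' Hy'.
  apply (proj2 (Hiff x y x' y' Hxy)). split. apply Hfar; auto.
  exists (fun s => x + s * (x' - x)), (fun s => y + s * (y' - y)).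
  split. ring. split. ring. split. ring. split. ring. split.
  - intros s _. split; apply derivable_continuous_pt; eexists; apply is_derive_Reals; apply isd_lin.
  - intros s Hs. apply Hfar.
    + replace (x + s * (x' - x) - x) with (s * (x' - x)) by ring. rewrite Rabs_mult.
      rewrite (Rabs_right s) by lra. assert (0 <= Rabs (x' - x)) by apply Rabs_pos. nra.
    + replace (y + s * (y' - y) - y) with (s * (y' - y)) by ring. rewrite Rabs_mult.
      rewrite (Rabs_right s) by lra. assert (0 <= Rabs (y' - y)) by apply Rabs_pos. nra.
Qed.

Lemma archi_inv eps : 0 < eps -> exists N, forall n, (N <= n)%nat -> / INR (S n) < eps.
Proof.
  intros He. destruct (nfloor_ex (/ eps)) as [N [_ HN]]. apply Rlt_le, Rinv_0_lt_compat; auto.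
  exists N. intros n Hn.
  assert (INR N <= INR n) by (apply le_INR; auto).
  rewrite S_INR. assert (0 <= INR n) by apply pos_INR.
  apply Rlt_le_trans with (/ (/ eps)). apply Rinv_lt_contravar.
  apply Rmult_lt_0_compat. apply Rinv_0_lt_compat; auto. lra. lra.
  rewrite Rinv_inv. lra.
Qed.

Lemma strict_mono (phi : nat -> nat) : (forall n, (phi n < phi (S n))%nat) ->
  forall a b, (a < b)%nat -> (phi a < phi b)%nat.
Proof.
  intros H a b Hab. induction Hab. apply H. specialize (H m). lia.
Qed.

Lemma mono_ge (phi : nat -> nat) : (forall n, (phi n < phi (S n))%nat) -> forall n, (n <= phi n)%nat.
Proof. intros H n. induction n. lia. specialize (H n). lia. Qed.

Lemma BW1 (u : nat -> R) M : (forall n, Rabs (u n) <= M) ->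
  exists phi : nat -> nat, (forall n, (phi n < phi (S n))%nat) /\ exists l : R, is_lim_seq (fun n => u (phi n)) l.
Proof.
  intros Hb.
  destruct (Bolzano_Weierstrass u (fun c => -M <= c <= M) (compact_P3 (-M) M)) as [l Hl].
  { intros n. specialize (Hb n). apply Rabs_le_between. auto. }
  assert (Hex : forall N k, exists p, (N <= p)%nat /\ Rabs (u p - l) < / INR (S k)).
  { intros N k.
    assert (Hk : 0 < / INR (S k)) by (apply Rinv_0_lt_compat, lt_0_INR; lia).
    destruct (Hl (disc l (mkposreal _ Hk)) N) as [p [Hp1 Hp2]].
    { exists (mkposreal _ Hk). intros z Hz. exact Hz. }
    exists p. split; auto. }
  assert (ch : forall N k, {p | (N <= p)%nat /\ Rabs (u p - l) < / INR (S k)}).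
  { intros N k. apply constructive_indefinite_description. apply Hex. }
  set (phi := fix f n := match n with O => proj1_sig (ch 0%nat 0%nat) | S n' => proj1_sig (ch (S (f n')) n) end).
  assert (Hinc : forall n, (phi n < phi (S n))%nat).
  { intros n. simpl. destruct (ch (S (phi n)) (S n)) as [p [Hp1 Hp2]]. simpl. lia. }
  assert (Hclose : forall n, Rabs (u (phi n) - l) < / INR (S n)).
  { intros [|n]; simpl.
    - destruct (ch 0%nat 0%nat) as [p [Hp1 Hp2]]. simpl. exact Hp2.
    - destruct (ch (S (phi n)) (S n)) as [p [Hp1 Hp2]]. simpl. exact Hp2. }
  exists phi. split; auto. exists l.
  apply is_lim_seq_Reals. intros eps He. destruct (archi_inv eps He) as [N HN].
  exists N. intros n Hn. unfold R_dist. specialize (HN n Hn). specialize (Hclose n). lra.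
Qed.

Lemma BW2 (u v : nat -> R) M : (forall n, Rabs (u n) <= M) -> (forall n, Rabs (v n) <= M) ->
  exists phi : nat -> nat, (forall n, (phi n < phi (S n))%nat) /\ exists lu lv : R,
    is_lim_seq (fun n => u (phi n)) lu /\ is_lim_seq (fun n => v (phi n)) lv.
Proof.
  intros Hu Hv.
  destruct (BW1 u M Hu) as [phi1 [Hi1 [lu Hlu]]].
  destruct (BW1 (fun n => v (phi1 n)) M (fun n => Hv (phi1 n))) as [phi2 [Hi2 [lv Hlv]]].
  exists (fun n => phi1 (phi2 n)). split.
  - intros n. apply strict_mono; auto.
  - exists lu, lv. split; auto.
    apply (is_lim_seq_subseq (fun n => u (phi1 n)) lu phi2). apply eventually_subseq; auto. auto.
Qed.

Lemma choice2 (P : nat -> R -> R -> Prop) : (forall n, exists x y, P n x y) ->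
  exists a b : nat -> R, forall n, P n (a n) (b n).
Proof.
  intros H.
  assert (ch : forall n, {p : R * R | P n (fst p) (snd p)}).
  { intros n. apply constructive_indefinite_description. destruct (H n) as [x [y Hxy]]. exists (x, y). exact Hxy. }
  exists (fun n => fst (proj1_sig (ch n))), (fun n => snd (proj1_sig (ch n))).
  intros n. destruct (ch n) as [p Hp]. exact Hp.
Qed.

Section MaxSec.
Variable K : R -> R -> Prop.
Variable phi : R -> R -> R.
Variable M : R.
Hypothesis Kbd : forall x y, K x y -> Rabs x <= M /\ Rabs y <= M.
Hypothesis Kcl : forall x y, closure2 K x y -> K x y.
Hypothesis Kcont : forall x y, K x y -> forall eps, 0 < eps -> exists d, 0 < d /\
  forall x' y', Rabs (x' - x) < d -> Rabs (y' - y) < d -> Rabs (phi x' y' - phi x y) < eps.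

Lemma seq_conv (a b : nat -> R) : (forall n, K (a n) (b n)) ->
  exists sg : nat -> nat, (forall n, (sg n < sg (S n))%nat) /\ exists x y, K x y /\
    is_lim_seq (fun n => phi (a (sg n)) (b (sg n))) (phi x y).
Proof.
  intros HK.
  destruct (BW2 a b M (fun n => proj1 (Kbd _ _ (HK n))) (fun n => proj2 (Kbd _ _ (HK n))))
    as [sg [Hsg [lu [lv [Hlu Hlv]]]]].
  apply is_lim_seq_Reals in Hlu. apply is_lim_seq_Reals in Hlv.
  assert (HKl : K lu lv).
  { apply Kcl. intros e He. destruct (Hlu e He) as [N1 HN1]. destruct (Hlv e He) as [N2 HN2].
    exists (a (sg (max N1 N2))), (b (sg (max N1 N2))). split. auto.
    split. apply (HN1 (max N1 N2)); lia. apply (HN2 (max N1 N2)); lia. }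
  exists sg. split; auto. exists lu, lv. split; auto.
  apply is_lim_seq_Reals. intros eps He.
  destruct (Kcont lu lv HKl eps He) as [d [Hd Hd']].
  destruct (Hlu d Hd) as [N1 HN1]. destruct (Hlv d Hd) as [N2 HN2].
  exists (max N1 N2). intros n Hn. unfold R_dist. apply Hd'. apply (HN1 n); lia. apply (HN2 n); lia.
Qed.

Lemma max_attained x1 y1 : K x1 y1 ->
  exists xm ym, K xm ym /\ forall x y, K x y -> phi x y <= phi xm ym.
Proof.
  intros H1.
  assert (Hbd : exists B, forall x y, K x y -> phi x y <= B).
  { destruct (classic (exists B, forall x y, K x y -> phi x y <= B)) as [|Hn]; auto. exfalso.
    assert (Hs : forall n, exists x y, K x y /\ INR n < phi x y).
    { intros n. apply NNPP. intros Hc. apply Hn. exists (INR n). intros x y Hxy.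
      apply Rnot_lt_le. intros Hlt. apply Hc. exists x, y. auto. }
    destruct (choice2 _ Hs) as [a [b Hab]].
    destruct (seq_conv a b (fun n => proj1 (Hab n))) as [sg [Hsg [x [y [Hxy Hl]]]]].
    apply is_lim_seq_Reals in Hl. destruct (Hl 1 ltac:(lra)) as [N HN].
    destruct (nfloor_ex (Rabs (phi x y) + 1)) as [n0 [_ Hn0]].
    { assert (0 <= Rabs (phi x y)) by apply Rabs_pos. lra. }
    set (n := max N (S n0)).
    specialize (HN n ltac:(unfold n; lia)). unfold R_dist in HN. apply Rabs_def2 in HN.
    destruct (Hab (sg n)) as [_ Hgt].
    assert (INR n <= INR (sg n)) by (apply le_INR, mono_ge; auto).
    assert (INR (S n0) <= INR n) by (apply le_INR; unfold n; lia).
    rewrite S_INR in *. assert (phi x y <= Rabs (phi x y)) by apply Rle_abs. lra. }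
  destruct Hbd as [B HB].
  set (E := fun z => exists x y, K x y /\ z = phi x y).
  destruct (completeness E) as [s [Hs1 Hs2]].
  { exists B. intros z [x [y [Hxy ->]]]. apply HB; auto. }
  { exists (phi x1 y1). exists x1, y1. auto. }
  assert (Hs : forall n, exists x y, K x y /\ s - / INR (S n) < phi x y).
  { intros n. apply NNPP. intros Hc.
    assert (Hpos : 0 < / INR (S n)) by (apply Rinv_0_lt_compat, lt_0_INR; lia).
    assert (s <= s - / INR (S n)); [|lra].
    apply Hs2. intros z [x [y [Hxy ->]]]. apply Rnot_lt_le. intros Hlt. apply Hc. exists x, y. auto. }
  destruct (choice2 _ Hs) as [a [b Hab]].
  destruct (seq_conv a b (fun n => proj1 (Hab n))) as [sg [Hsg [xm [ym [Hxy Hl]]]]].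
  exists xm, ym. split; auto.
  assert (Hge : s <= phi xm ym).
  { apply Rnot_lt_le. intros Hlt.
    set (eps := (s - phi xm ym) / 2).
    assert (He : 0 < eps) by (unfold eps; lra).
    apply is_lim_seq_Reals in Hl. destruct (Hl eps He) as [N1 HN1].
    destruct (archi_inv eps He) as [N2 HN2].
    set (n := max N1 N2).
    specialize (HN1 n ltac:(unfold n; lia)). unfold R_dist in HN1. apply Rabs_def2 in HN1.
    destruct (Hab (sg n)) as [_ Hgt].
    specialize (HN2 (sg n) ltac:(assert (n <= sg n)%nat by (apply mono_ge; auto); unfold n in *; lia)).
    unfold eps in *. lra. }
  intros x y Hxy'. apply Rle_trans with s; auto. apply Hs1. exists x, y. auto.
Qed.
End MaxSec.

Lemma sum_zero_pow (X : nat -> R) N : sum_f_R0 (fun m => X m * 0 ^ m) N = X 0%nat.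
Proof. induction N; simpl. ring. rewrite IHN. ring. Qed.

Lemma locfam_slice f (U : R -> R -> R -> Prop) x0 y0 t :
  analytic3_on U f -> U x0 y0 t -> LocFam (slice f t) x0 y0.
Proof.
  intros HA HU. destruct (HA x0 y0 t HU) as [c [r [Hr [[M HM] Hconv]]]].
  apply (locfam_of_series (slice f t) x0 y0 (fun i j => c i j 0%nat) r M Hr).
  - intros N. eapply Rle_trans. 2: apply (HM N). unfold S2, psum3.
    apply sum_Rle. intros i _. apply sum_Rle. intros j _.
    eapply Rle_trans. 2: apply (sum_term_le (fun m => Rabs (c i j m) * r ^ i * r ^ j * r ^ m) N 0%nat).
    simpl. lra.
    intros k. apply Rmult_le_pos. apply Rmult_le_pos. apply Rmult_le_pos. apply Rabs_pos.
    apply pow_le; lra. apply pow_le; lra. apply pow_le; lra. lia.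
  - intros x y Hx Hy. unfold slice.
    specialize (Hconv x y t Hx Hy ltac:(rewrite Rminus_diag, Rabs_R0; lra)).
    rewrite Rminus_diag in Hconv.
    eapply is_lim_seq_ext. 2: apply Hconv. intros N. unfold psum3, S2.
    apply sum_eq. intros i _. apply sum_eq. intros j _.
    apply (sum_zero_pow (fun m => c i j m * (x - x0) ^ i * (y - y0) ^ j)).
Qed.

Lemma to_c2d (h : R -> R -> R) x y :
  (forall eps, 0 < eps -> exists d, 0 < d /\ forall x' y', Rabs (x' - x) < d -> Rabs (y' - y) < d ->
     Rabs (h x' y' - h x y) < eps) -> continuity_2d_pt h x y.
Proof.
  intros H eps. destruct (H eps (cond_pos eps)) as [d [Hd Hd']]. exists (mkposreal d Hd). auto.
Qed.

Lemma from_c2d (h : R -> R -> R) x y : continuity_2d_pt h x y ->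
  (forall eps, 0 < eps -> exists d, 0 < d /\ forall x' y', Rabs (x' - x) < d -> Rabs (y' - y) < d ->
     Rabs (h x' y' - h x y) < eps).
Proof.
  intros H eps He. destruct (H (mkposreal eps He)) as [d Hd]. exists d. split. apply cond_pos. auto.
Qed.

Lemma locfam_cont G x0 y0 : LocFam G x0 y0 -> continuity_2d_pt G x0 y0.
Proof.
  intros [A [rho [Hr [HG [HL HK]]]]]. apply to_c2d. apply (cont_G G x0 y0 A rho); auto.
Qed.

Lemma closure_closed Om x y : closure2 (closure2 Om) x y -> closure2 Om x y.
Proof.
  intros H e He. destruct (H (e / 2) ltac:(lra)) as [x1 [y1 [H1 [Hx1 Hy1]]]].
  destruct (H1 (e / 2) ltac:(lra)) as [x2 [y2 [H2 [Hx2 Hy2]]]].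
  exists x2, y2. split; auto.
  split.
  - replace (x2 - x) with ((x2 - x1) + (x1 - x)) by ring. eapply Rle_lt_trans. apply Rabs_triang. lra.
  - replace (y2 - y) with ((y2 - y1) + (y1 - y)) by ring. eapply Rle_lt_trans. apply Rabs_triang. lra.
Qed.

Lemma in_closure (Om : R -> R -> Prop) x y : Om x y -> closure2 Om x y.
Proof. intros H e He. exists x, y. rewrite !Rminus_diag, !Rabs_R0. repeat split; auto. Qed.

Lemma jordan_bounded Om : jordan_analytic_domain Om -> bounded2 Om.
Proof.
  intros [g1 [g2 [T [HT [Ha1 [Ha2 [Hper [Hinj [Hder Hrest]]]]]]]]]. cbv zeta in Hrest.
  destruct Hrest as [_ [Hbd _]]. exact Hbd.
Qed.

Lemma key_le Om f0 eps f g : jordan_analytic_domain Om ->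
  admissible_family Om f0 eps f -> admissible_family Om f0 eps g ->
  forall t, -eps <= t <= eps -> forall x y, closure2 Om x y -> f x y t - g x y t <= 0.
Proof.
  intros HJ Hf Hg t Ht x y Hxy.
  destruct Hf as [[Uf [_ [HUf HAf]]] [Pf [_ Bf]]].
  destruct Hg as [[Ug [_ [HUg HAg]]] [Pg [_ Bg]]].
  assert (LF : forall p q, closure2 Om p q -> LocFam (slice f t) p q).
  { intros p q Hpq. apply (locfam_slice f Uf); auto. }
  assert (LG : forall p q, closure2 Om p q -> LocFam (slice g t) p q).
  { intros p q Hpq. apply (locfam_slice g Ug); auto. }
  destruct (jordan_bounded Om HJ) as [M0 HM0].
  assert (Kbd : forall p q, closure2 Om p q -> Rabs p <= M0 + 1 /\ Rabs q <= M0 + 1).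
  { intros p q Hpq. destruct (Hpq 1 ltac:(lra)) as [p' [q' [H' [Hp Hq]]]].
    destruct (HM0 p' q' H'). split.
    - replace p with (p' - (p' - p)) by ring. eapply Rle_trans. apply Rabs_triang.
      rewrite Rabs_Ropp. lra.
    - replace q with (q' - (q' - q)) by ring. eapply Rle_trans. apply Rabs_triang.
      rewrite Rabs_Ropp. lra. }
  assert (HM0p : 0 <= M0) by (destruct (Kbd x y Hxy); destruct (Hxy 1 ltac:(lra)) as [p' [q' [H' _]]];
     destruct (HM0 p' q' H'); assert (0 <= Rabs p') by apply Rabs_pos; lra).
  assert (Hd : forall dl, 0 < dl -> f x y t - g x y t <= 2 * dl * (M0 + 1) ^ 2).
  { intros dl Hdl.
    set (phi := fun p q => slice f t p q + dl * (p ^ 2 + q ^ 2) - slice g t p q).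
    assert (Kcont : forall p q, closure2 Om p q -> forall e, 0 < e -> exists d, 0 < d /\
       forall p' q', Rabs (p' - p) < d -> Rabs (q' - q) < d -> Rabs (phi p' q' - phi p q) < e).
    { intros p q Hpq. apply from_c2d. unfold phi.
      apply continuity_2d_pt_minus. apply continuity_2d_pt_plus.
      apply locfam_cont; auto.
      apply continuity_2d_pt_mult. apply continuity_2d_pt_const.
      apply continuity_2d_pt_plus.
      - eapply continuity_2d_pt_ext. 2: apply continuity_2d_pt_mult; apply continuity_2d_pt_id1.
        intros; simpl; ring.
      - eapply continuity_2d_pt_ext. 2: apply continuity_2d_pt_mult; apply continuity_2d_pt_id2.
        intros; simpl; ring.
      - apply locfam_cont; auto. }
    destruct (max_attained (closure2 Om) phi (M0 + 1) Kbd (closure_closed Om) Kcont x y Hxy)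
      as [xm [ym [Hm Hmax]]].
    assert (Hphim : phi xm ym <= 2 * dl * (M0 + 1) ^ 2).
    { destruct (classic (Om xm ym)) as [Hin|Hout].
      - exfalso.
        destruct (Om_open Om HJ xm ym Hin) as [e [He He']].
        apply (interior_contra (slice f t) (slice g t) xm ym dl t (LF xm ym Hm) (LG xm ym Hm) Hdl).
        + exists e. split; auto. intros p q Hp Hq. apply (Hmax p q). apply in_closure. apply He'; auto.
        + apply (Pf xm ym t Hin Ht).
        + apply (Pg xm ym t Hin Ht).
      - assert (Hb : boundary2 Om xm ym) by (split; auto).
        unfold phi, slice. rewrite (Bf xm ym t Hb Ht), (Bg xm ym t Hb Ht).
        destruct (Kbd xm ym Hm) as [H1 H2].
        assert (xm ^ 2 <= (M0 + 1) ^ 2).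
        { rewrite <- (Rsqr_pow2 xm), <- Rsqr_pow2, (Rsqr_abs xm). apply Rsqr_incr_1; auto. apply Rabs_pos. lra. }
        assert (ym ^ 2 <= (M0 + 1) ^ 2).
        { rewrite <- (Rsqr_pow2 ym), <- Rsqr_pow2, (Rsqr_abs ym). apply Rsqr_incr_1; auto. apply Rabs_pos. lra. }
        nra. }
    specialize (Hmax x y Hxy). unfold phi, slice in Hmax, Hphim.
    assert (0 <= x ^ 2 + y ^ 2) by (apply Rplus_le_le_0_compat; apply pow2_ge_0).
    assert (0 <= dl * (x ^ 2 + y ^ 2)) by (apply Rmult_le_pos; lra).
    lra. }
  destruct (Rle_or_lt (f x y t - g x y t) 0) as [|Hpos]; auto. exfalso.
  set (D := f x y t - g x y t) in *.
  assert (HK : 0 < 4 * (M0 + 1) ^ 2) by (apply Rmult_lt_0_compat; [lra| apply pow_lt; lra]).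
  specialize (Hd (D / (4 * (M0 + 1) ^ 2)) ltac:(apply Rdiv_lt_0_compat; lra)).
  replace (2 * (D / (4 * (M0 + 1) ^ 2)) * (M0 + 1) ^ 2) with (D / 2) in Hd by (field; lra).
  lra.
Qed.

Theorem corollary3 (Om : R -> R -> Prop) (f0 : R -> R -> R) (eps : R) :
  jordan_analytic_domain Om ->
  analytic2_near (closure2 Om) f0 ->
  (forall x y, Om x y -> fxx f0 x y + fyy f0 x y = 0) ->
  (forall x y, closure2 Om x y ->
     fxx f0 x y * fyy f0 x y - (fxy f0 x y) ^ 2 <> 0) ->
  0 < eps ->
  forall f g : R -> R -> R -> R,
    admissible_family Om f0 eps f ->
    admissible_family Om f0 eps g ->
    forall x y t, closure2 Om x y -> -eps <= t <= eps -> f x y t = g x y t.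
Proof.
  intros HJ _ _ _ _ f g Hf Hg x y t Hxy Ht.
  assert (H1 := key_le Om f0 eps f g HJ Hf Hg t Ht x y Hxy).
  assert (H2 := key_le Om f0 eps g f HJ Hg Hf t Ht x y Hxy).
  lra.
Qed.
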